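(* Let $\mathcal R$ be a strong CCTRS over $\mathcal F$ and $\upsilon$ a usable replacement map for $\mathcal R$. Then $\mathrm{crc}_{\mathcal R}(n)\le\mathrm{rc}_{\Xi(\mathcal R),\mu\upsilon}(n)$ for all $n\ge0$.
   Context: A CCTRS over $\mathcal F$ is a set $\mathcal R$ of conditional rules each of the form $f(\ell_1,\dots,\ell_n)\to r\Leftarrow a_1\approx b_1,\dots,a_k\approx b_k$ (defined symbols $\mathcal F_{\mathcal D}$ are roots of left-hand sides, others constructors; constructor terms contain only constructors and variables; a basic term is $f(t_1,\dots,t_n)$ with $f$ defined and all $t_i$ constructor terms) where $\ell_1,\dots,\ell_n,b_1,\dots,b_k$ are constructor terms, the terms $f(\ell_1,\dots,\ell_n),b_1,\dots,b_k$ pairwise share no variables, $\mathrm{Var}(r)\subseteq\mathrm{Var}(\ell_1,\dots,\ell_n,b_1,\dots,b_k)$, and $\mathrm{Var}(a_i)\subseteq\mathrm{Var}(\ell_1,\dots,\ell_n,b_1,\dots,b_{i-1})$; write $b_0=f(\ell_1,\dots,\ell_n)$ and $a_{k+1}=r$. $\mathcal R{\restriction}f$ is the set of rules with left-hand root $f$. A strong CCTRS is a CCTRS with each $\mathcal R{\restriction}f$ finite and each $f(\ell_1,\dots,\ell_n)$ and $b_j$ linear. Let $m_f=|\mathcal R{\restriction}f|$ (0 for constructors), with fixed enumeration $\rho^f_1,\dots,\rho^f_{m_f}$. Labeled reduction: $\mathcal G$ consists of the constructors and symbols $f_R$ ($R\subseteq\mathcal R{\restriction}f$, same arity as $f$);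 $\mathrm{label}$ replaces each defined $f$ by $f_{\mathcal R\restriction f}$; $\mathrm{erase}$ removes labels; labeled normal forms are terms over constructors, symbols $f_\emptyset$ and variables. $s\rightharpoonup t$ is defined inductively: either (i, $\bot$-step) there are $p$ and a rule $\rho\colon\ell\to r\Leftarrow c$ with $s|_p=f_R(s_1,\dots,s_n)$, $\rho\in R$, $t=s[f_{R\setminus\{\rho\}}(s_1,\dots,s_n)]_p$, and linear labeled normal forms $u_1,\dots,u_n$ on fresh variables and $\sigma$ with $s|_p=f_R(u_1,\dots,u_n)\sigma$ and $f(\mathrm{erase}(u_1),\dots,\mathrm{erase}(u_n))$ not unifiable with $\ell$; or (ii) there are $p$, $\rho\colon f(\ell_1,\dots,\ell_n)\to r\Leftarrow a_1\approx b_1,\dots,a_k\approx b_k$, $\sigma$, $0\le j\le k$ with $s|_p=f_R(\ell_1\sigma,\dots,\ell_n\sigma)$, $\rho\in R$, $\mathrm{label}(a_i)\sigma\rightharpoonup^*b_i\sigma$ for $1\le i\le j$, and either (successful) $j=k$, $t=s[\mathrm{label}(r)\sigma]_p$, or (failed) $j<k$, $\mathrm{label}(a_{j+1})\sigma\rightharpoonup^*u\tau$ for a linear labeled normal form $u$ with $\mathrm{erase}(u)$ not unifiable with $b_{j+1}$, and $t=s[f_{R\setminus\{\rho\}}(\ell_1\sigma,\dots,\ell_n\sigma)]_p$. A complexity-conscious reduction is a labeled reduction with chosen witnessing condition reductions; its cost is the sum of step costs: a $\bot$-step costs $0$, a successful step $1$ plus the costs of its $k$ condition reductions, a failed step the sum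 of the costs of its $j$ condition reductions and of $\mathrm{label}(a_{j+1})\sigma\rightharpoonup^*u\tau$. $s\rightharpoonup_\rhd t$ if there are $p$, $\rho$ as in (ii), $\sigma$, $0\le j<k$ with $s|_p=f_R(\ell_1\sigma,\dots,\ell_n\sigma)$, $\rho\in R$, $\mathrm{label}(a_i)\sigma\rightharpoonup^*b_i\sigma$ for $i\le j$, $t=\mathrm{label}(a_{j+1})\sigma$; $s\rightharpoonup^\infty$ means an infinite sequence of $\rightharpoonup\cup\rightharpoonup_\rhd$ steps from $s$. For a labeled term $s$, $\mathrm{dh}(s)$ is the maximum of the costs of all complexity-conscious reductions starting from $s$, together with $\infty$ if $s\rightharpoonup^\infty$. $\mathrm{crc}_{\mathcal R}(n)=\max\{\mathrm{dh}(\mathrm{label}(t))\mid t\text{ ground basic},\ |t|\le n\}$, with $|t|$ the number of symbols in $t$. The transformed system: signature $\mathcal H$ with constants $\bot,\top$; every $f\in\mathcal F$ of arity $n$ as a symbol of arity $n+m_f$ with $\mu(f)=\{1,\dots,n\}$; for every defined $f$ of arity $n$, every $\rho^f_i$ with $k>0$ conditions and $1\le j\le k$ a symbol $f_i^j$ of arity $n+m_f+j-1$ with $\mu(f_i^j)=\{n+i+j-1\}$; $\mu(\bot)=\mu(\top)=\emptyset$. For a replacement map $\nu$, a position is $\nu$-active in $t$ if it is $\epsilon$ or $iq$ with $i\in\nu(\mathrm{root}(t))$ and $q$ $\nu$-active in $t|_i$; $\mathrm{Pos}_\nu(t)$ is the set of $\nu$-active positions, and $\to_{\Xi(\mathcal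 R),\nu}$ rewrites only at $\nu$-active positions. $\xi_\star$ ($\star\in\{\bot,\top\}$): identity on variables, homomorphic on constructors, $f(t_1..t_n)\mapsto f(\xi_\star(t_1),\dots,\xi_\star(t_n),\star,\dots,\star)$ ($m_f$ copies) for defined $f$. For a linear constructor term $t$: $\mathrm{AP}(x)=\emptyset$, and $\mathrm{AP}(f(t_1,\dots,t_n))$ consists of $g(x_1,\dots,x_m)$ for every constructor $g\neq f$ of arity $m$, $g(x_1,\dots,x_m,\bot,\dots,\bot)$ for every defined $g$ of arity $m$, and $f(x_1,\dots,x_{i-1},u,x_{i+1},\dots,x_n)$ for $u\in\mathrm{AP}(t_i)$ (fresh distinct $x$'s). Notation: $\langle t_1,\dots,t_n\rangle[u_1,\dots,u_j]_i$ is $t_1,\dots,t_{i-1},u_1,\dots,u_j,t_{i+1},\dots,t_n$. For the $i$-th rule $\rho_i\colon f(\vec\ell)\to r\Leftarrow a_1\approx b_1,\dots,a_k\approx b_k$ of $\mathcal R{\restriction}f$ and fresh distinct $x_1,\dots,x_{m_f},y_1,\dots,y_n$, $\Xi(\mathcal R)$ contains: $(1)$ if $k=0$: $f(\vec\ell,\langle\vec x\rangle[\top]_i)\to\xi_\top(r)$; if $k>0$: $(2)$ $f(\vec\ell,\langle\vec x\rangle[\top]_i)\to f_i^1(\vec\ell,\langle\vec x\rangle[\xi_\top(a_1)]_i)$, $(3)$ $f_i^k(\vec\ell,\langle\vec x\rangle[b_1,\dots,b_k]_i)\to\xi_\top(r)$, $(4)$ for $1\le j<k$: $f_i^j(\vec\ell,\langle\vec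 x\rangle[b_1,\dots,b_j]_i)\to f_i^{j+1}(\vec\ell,\langle\vec x\rangle[b_1,\dots,b_j,\xi_\top(a_{j+1})]_i)$, $(5)$ for $1\le j\le k$ and $v\in\mathrm{AP}(b_j)$: $f_i^j(\vec\ell,\langle\vec x\rangle[b_1,\dots,b_{j-1},v]_i)\to f(\vec\ell,\langle\vec x\rangle[\bot]_i)$; and for any $k$: $(6)$ for $1\le j\le n$, $v\in\mathrm{AP}(\ell_j)$: $f(\langle\vec y\rangle[v]_j,\langle\vec x\rangle[\top]_i)\to f(\langle\vec y\rangle[v]_j,\langle\vec x\rangle[\bot]_i)$. The cost of a $\Xi(\mathcal R)$-reduction is the number of steps with rules of type (1) or (3). For $s\in\mathcal T(\mathcal H)$, $\mathrm{dh}_\nu(s)$ is the maximum cost of a $\to_{\Xi(\mathcal R),\nu}$-reduction from $s$ ($\infty$ if $s$ is non-terminating), and $\mathrm{rc}_{\Xi(\mathcal R),\nu}(n)=\max\{\mathrm{dh}_\nu(s)\mid s\in\mathcal T(\mathcal H)\text{ basic},\ |s|\le n\}$, where basic means the root is $f$ or $f_i^j$ ($f$ defined) and all arguments are built from constructors of $\mathcal F$ and $\bot,\top$, and $|s|$ counts the function symbols of $s$ other than $\top$. A replacement map $\upsilon$ on $\mathcal F$ (assigning to each $n$-ary $f$ a subset of $\{1,\dots,n\}$) is usable for $\mathcal R$ if for every rule $b_0\to a_{k+1}\Leftarrow a_1\approx b_1,\dots,a_k\approx b_k$, all $1\le i\le k+1$ and $p\in\mathrm{Pos}(a_i)$: $p\in\mathrm{Pos}_\upsilon(a_i)$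 whenever either the symbol of $a_i$ at $p$ is defined, or $p$ is a variable position of $a_i$ and there are $0\le j<i$ and $q\in\mathrm{Pos}_\upsilon(b_j)$ with $a_i|_p=b_j|_q$. The replacement map $\mu\upsilon$ on $\mathcal H$ is $\mu\upsilon(f)=\upsilon(f)$ for $f\in\mathcal H\cap\mathcal F$ and $\mu\upsilon(g)=\mu(g)$ for $g\in\mathcal H\setminus\mathcal F$. *)

(* Defs.v *)
From Stdlib Require Import List Arith Lia ClassicalEpsilon.
Import ListNotations.

Inductive enat : Type := fin : nat -> enat | inf : enat.

Definition ele (x y : enat) : Prop :=
  match x, y with
  | _, inf => True
  | inf, fin _ => False
  | fin a, fin b => a <= b
  end.

Definition is_lub (P : enat -> Prop) (x : enat) : Prop :=
  (forall y, P y -> ele y x) /\ (forall z, (forall y, P y -> ele y z) -> ele x z).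

(* the supremum ("maximum") of a set of extended naturals; sup of the empty set is 0 *)
Definition esup (P : enat -> Prop) : enat := epsilon (inhabits inf) (is_lub P).

Inductive term (S : Type) : Type :=
| Var : nat -> term S
| Fun : S -> list (term S) -> term S.
Arguments Var {S} _.
Arguments Fun {S} _ _.

Fixpoint subst {S : Type} (s : nat -> term S) (t : term S) : term S :=
  match t with
  | Var x => s x
  | Fun g ts => Fun g (map (subst s) ts)
  end.

Fixpoint vars {S : Type} (t : term S) : list nat :=
  match t with
  | Var x => [x]
  | Fun _ ts => flat_map vars ts
  end.

Definition linear {S : Type} (t : term S) : Prop := NoDup (vars t).

Definition disjoint (xs ys : list nat) : Prop := forall x, In x xs -> ~ In x ys.

Fixpoint allsyms {S : Type} (P : S -> nat -> Prop) (t : term S) : Prop :=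
  match t with
  | Var _ => True
  | Fun g ts => P g (length ts) /\ fold_right (fun u acc => allsyms P u /\ acc) True ts
  end.

Fixpoint wsize {S : Type} (w : S -> nat) (t : term S) : nat :=
  match t with
  | Var _ => 0
  | Fun g ts => w g + list_sum (map (wsize w) ts)
  end.

(* positions are lists of 1-based argument indices *)
Fixpoint subterm_at {S : Type} (t : term S) (p : list nat) : option (term S) :=
  match p with
  | [] => Some t
  | i :: q =>
      match t with
      | Var _ => None
      | Fun _ ts =>
          match i with
          | 0 => None
          | S i' => match nth_error ts i' with
                    | Some u => subterm_at u q
                    | None => None
                    end
          end
      end
  end.

Fixpoint active {S : Type} (nu : S -> nat -> Prop) (t : term S) (p : list nat) : Prop :=
  match p with
  | [] => True
  | i :: q =>
      match t with
      | Var _ => False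
      | Fun g ts =>
          nu g i /\
          match i with
          | 0 => False
          | S i' => match nth_error ts i' with
                    | Some u => active nu u q
                    | None => False
                    end
          end
      end
  end.

Definition unifiable {S : Type} (s t : term S) : Prop :=
  exists th : nat -> term S, subst th s = subst th t.

(* <t_1,...,t_n>[u_1,...,u_j]_i   (i is 1-based) *)
Definition repl {A : Type} (ts : list A) (i : nat) (us : list A) : list A :=
  firstn (i - 1) ts ++ us ++ skipn i ts.

(* f(l_1,...,l_n) -> r <= a_1 ~ b_1, ..., a_k ~ b_k *)
Record crule (F : Type) : Type := mkRule {
  lhs_f : F;
  lhs_args : list (term F);
  rhs : term F;
  conds : list (term F * term F)
}.
Arguments lhs_f {F} _.
Arguments lhs_args {F} _.
Arguments rhs {F} _.
Arguments conds {F} _.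

Definition lhs {F : Type} (rho : crule F) : term F := Fun (lhs_f rho) (lhs_args rho).

(* labeled symbols: constructors, and f_L where L is the set of (0-based)
   indices into the fixed enumeration Rs f of R|f *)
Inductive lsym (F : Type) : Type :=
| LC : F -> lsym F
| LD : F -> list nat -> lsym F.
Arguments LC {F} _.
Arguments LD {F} _ _.

Inductive hsym (F : Type) : Type :=
| HBot : hsym F
| HTop : hsym F
| HF : F -> hsym F                    (* f, of arity n + m_f *)
| HAux : F -> nat -> nat -> hsym F.   (* f_i^j, i and j 1-based *)
Arguments HBot {F}.
Arguments HTop {F}.
Arguments HF {F} _.
Arguments HAux {F} _ _ _.

Section CCTRS.
Context {F : Type} (ar : F -> nat).
(* The system: R|f is given by the fixed duplicate-free enumeration Rs f
   (rho^f_1, ..., rho^f_{m_f}); R is the union of all Rs f. *)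
Context (Rs : F -> list (crule F)).

Definition mf (f : F) : nat := length (Rs f).
Definition is_defined (f : F) : Prop := Rs f <> [].
Definition is_constructor (f : F) : Prop := Rs f = [].

Definition wf (t : term F) : Prop := allsyms (fun g n => n = ar g) t.
Definition cterm (t : term F) : Prop := allsyms (fun g _ => is_constructor g) t.

Definition strong_cctrs : Prop :=
  forall f, NoDup (Rs f) /\
  forall rho, In rho (Rs f) ->
    let bs := map snd (conds rho) in
    let bs0 := lhs rho :: bs in
    lhs_f rho = f /\
    wf (lhs rho) /\ wf (rhs rho) /\
    Forall (fun c => wf (fst c) /\ wf (snd c)) (conds rho) /\
    Forall cterm (lhs_args rho) /\ Forall cterm bs /\
    (forall i j u v, i <> j -> nth_error bs0 i = Some u -> nth_error bs0 j = Some v ->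
        disjoint (vars u) (vars v)) /\
    incl (vars (rhs rho)) (vars (lhs rho) ++ flat_map vars bs) /\
    (forall i a b, nth_error (conds rho) i = Some (a, b) ->
        incl (vars a) (vars (lhs rho) ++ flat_map vars (firstn i bs))) /\
    (* strong: linearity *)
    linear (lhs rho) /\ Forall linear bs.

Definition repmap (ups : F -> nat -> Prop) : Prop :=
  forall f i, ups f i -> 1 <= i <= ar f.

(* usable replacement map; a_{i0+1} for i0 < k is fst of the i0-th condition,
   a_{k+1} = r; b_0 = lhs, b_j = snd of the (j-1)-th condition *)
Definition usable (ups : F -> nat -> Prop) : Prop :=
  forall f rho, In rho (Rs f) ->
  let as_ := map fst (conds rho) ++ [rhs rho] in
  let bs0 := lhs rho :: map snd (conds rho) in
  forall i0 ai, nth_error as_ i0 = Some ai ->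
  forall p u, subterm_at ai p = Some u ->
  ((exists g us, u = Fun g us /\ is_defined g) \/
   (exists x, u = Var x /\
      exists j bj q, j <= i0 /\ nth_error bs0 j = Some bj /\
                     active ups bj q /\ subterm_at bj q = Some (Var x))) ->
  active ups ai p.

Fixpoint label (t : term F) : term (lsym F) :=
  match t with
  | Var x => Var x
  | Fun g ts =>
      Fun (match Rs g with
           | [] => LC g
           | _ => LD g (seq 0 (length (Rs g)))
           end) (map label ts)
  end.

Fixpoint erase (t : term (lsym F)) : term F :=
  match t with
  | Var x => Var x
  | Fun (LC c) ts => Fun c (map erase ts)
  | Fun (LD f _) ts => Fun f (map erase ts)
  end.

Definition remove_idx (i : nat) (L : list nat) : list nat :=
  filter (fun j => negb (Nat.eqb i j)) L.

Definition lnf (u : term (lsym F)) : Prop :=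
  allsyms (fun s _ => match s with
                      | LC c => is_constructor c
                      | LD f L => is_defined f /\ L = []
                      end) u.

Definition lsub (s : nat -> term (lsym F)) (t : term F) : term (lsym F) :=
  subst s (label t).

(* lstep s t c : s ⇀ t by a complexity-conscious step of cost c *)
Inductive lstep : term (lsym F) -> term (lsym F) -> nat -> Prop :=
| lstep_ctx g ls s t rs c :
    lstep s t c -> lstep (Fun g (ls ++ s :: rs)) (Fun g (ls ++ t :: rs)) c
| lstep_bot f L i rho us sg :
    In i L -> nth_error (Rs f) i = Some rho ->
    Forall lnf us ->
    NoDup (flat_map vars us) ->
    disjoint (flat_map vars us) (vars (lhs rho)) ->
    ~ unifiable (Fun f (map erase us)) (lhs rho) ->
    lstep (Fun (LD f L) (map (subst sg) us))
          (Fun (LD f (remove_idx i L)) (map (subst sg) us)) 0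
| lstep_succ f L i rho sg cs :
    In i L -> nth_error (Rs f) i = Some rho ->
    length cs = length (conds rho) ->
    (forall m a b c, nth_error (conds rho) m = Some (a, b) -> nth_error cs m = Some c ->
        lsteps (lsub sg a) (lsub sg b) c) ->
    lstep (Fun (LD f L) (map (lsub sg) (lhs_args rho)))
          (lsub sg (rhs rho)) (1 + list_sum cs)
| lstep_fail f L i rho sg cs a b u tau c :
    In i L -> nth_error (Rs f) i = Some rho ->
    length cs < length (conds rho) ->
    (forall m a b c, nth_error (conds rho) m = Some (a, b) -> nth_error cs m = Some c ->
        lsteps (lsub sg a) (lsub sg b) c) ->
    nth_error (conds rho) (length cs) = Some (a, b) ->
    lsteps (lsub sg a) (subst tau u) c ->
    lnf u -> linear u -> disjoint (vars u) (vars b) ->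
    ~ unifiable (erase u) b ->
    lstep (Fun (LD f L) (map (lsub sg) (lhs_args rho)))
          (Fun (LD f (remove_idx i L)) (map (lsub sg) (lhs_args rho)))
          (list_sum cs + c)
with lsteps : term (lsym F) -> term (lsym F) -> nat -> Prop :=
| lsteps_refl s : lsteps s s 0
| lsteps_step s t u c1 c2 : lstep s t c1 -> lsteps t u c2 -> lsteps s u (c1 + c2).

Inductive lcond_root : term (lsym F) -> term (lsym F) -> Prop :=
| lcond_root_intro f L i rho sg cs a b :
    In i L -> nth_error (Rs f) i = Some rho ->
    length cs < length (conds rho) ->
    (forall m a b c, nth_error (conds rho) m = Some (a, b) -> nth_error cs m = Some c ->
        lsteps (lsub sg a) (lsub sg b) c) ->
    nth_error (conds rho) (length cs) = Some (a, b) ->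
    lcond_root (Fun (LD f L) (map (lsub sg) (lhs_args rho))) (lsub sg a).

Inductive lcond : term (lsym F) -> term (lsym F) -> Prop :=
| lcond_here s t : lcond_root s t -> lcond s t
| lcond_below g ts s t : In s ts -> lcond s t -> lcond (Fun g ts) t.

Definition linf (s : term (lsym F)) : Prop :=
  exists sq : nat -> term (lsym F), sq 0 = s /\
    forall i, (exists c, lstep (sq i) (sq (S i)) c) \/ lcond (sq i) (sq (S i)).

Definition dh_lab (s : term (lsym F)) : enat :=
  esup (fun x => (exists t c, lsteps s t c /\ x = fin c) \/ (x = inf /\ linf s)).

Definition ground_basic (t : term F) : Prop :=
  wf t /\ vars t = [] /\
  exists f ts, t = Fun f ts /\ is_defined f /\ Forall cterm ts.

Definition crc (n : nat) : enat :=
  esup (fun x => exists t, ground_basic t /\ wsize (fun _ => 1) t <= n /\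
                           x = dh_lab (label t)).

Definition hbot : term (hsym F) := Fun HBot [].
Definition htop : term (hsym F) := Fun HTop [].

Definition hsym_ok (s : hsym F) (n : nat) : Prop :=
  match s with
  | HBot | HTop => n = 0
  | HF f => n = ar f + mf f
  | HAux f i j => exists rho, 1 <= i /\ nth_error (Rs f) (i - 1) = Some rho /\
                  1 <= j <= length (conds rho) /\ n = ar f + mf f + j - 1
  end.

Definition mu (s : hsym F) (p : nat) : Prop :=
  match s with
  | HBot | HTop => False
  | HF f => 1 <= p <= ar f
  | HAux f i j => p = ar f + i + j - 1
  end.

Definition mu_ups (ups : F -> nat -> Prop) (s : hsym F) (p : nat) : Prop :=
  match s with
  | HF f => ups f p
  | _ => mu s p
  end.

Fixpoint xi (st : term (hsym F)) (t : term F) : term (hsym F) :=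
  match t with
  | Var x => Var x
  | Fun g ts => Fun (HF g) (map (xi st) ts ++ repeat st (mf g))
  end.

Definition xiT := xi htop.

(* ap t v : v in AP(t), for a (linear) constructor term t; variable freshness and
   distinctness is imposed via linearity of the left-hand sides below *)
Inductive ap : term F -> term (hsym F) -> Prop :=
| ap_other f ts g xs :
    g <> f -> length xs = ar g ->
    ap (Fun f ts) (Fun (HF g) (map Var xs ++ repeat hbot (mf g)))
| ap_arg f ts i ti u xs :
    nth_error ts (i - 1) = Some ti -> 1 <= i -> ap ti u -> length xs = length ts ->
    ap (Fun f ts) (Fun (HF f) (repl (map Var xs) i [u])).

Definition LA (rho : crule F) : list (term (hsym F)) := map xiT (lhs_args rho).
Definition BS (rho : crule F) : list (term (hsym F)) := map (fun c => xiT (snd c)) (conds rho).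

(* xi_rule l r c : l -> r is a rule of Xi(R) of cost c (1 for types (1),(3)) *)
Inductive xi_rule : term (hsym F) -> term (hsym F) -> nat -> Prop :=
| xr1 f i rho xs :
    1 <= i -> nth_error (Rs f) (i - 1) = Some rho -> conds rho = [] ->
    length xs = mf f ->
    linear (Fun (HF f) (LA rho ++ repl (map Var xs) i [htop])) ->
    xi_rule (Fun (HF f) (LA rho ++ repl (map Var xs) i [htop])) (xiT (rhs rho)) 1
| xr2 f i rho xs a b :
    1 <= i -> nth_error (Rs f) (i - 1) = Some rho -> nth_error (conds rho) 0 = Some (a, b) ->
    length xs = mf f ->
    linear (Fun (HF f) (LA rho ++ repl (map Var xs) i [htop])) ->
    xi_rule (Fun (HF f) (LA rho ++ repl (map Var xs) i [htop]))
            (Fun (HAux f i 1) (LA rho ++ repl (map Var xs) i [xiT a])) 0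
| xr3 f i rho xs :
    1 <= i -> nth_error (Rs f) (i - 1) = Some rho -> 0 < length (conds rho) ->
    length xs = mf f ->
    linear (Fun (HAux f i (length (conds rho))) (LA rho ++ repl (map Var xs) i (BS rho))) ->
    xi_rule (Fun (HAux f i (length (conds rho))) (LA rho ++ repl (map Var xs) i (BS rho)))
            (xiT (rhs rho)) 1
| xr4 f i rho xs j a b :
    1 <= i -> nth_error (Rs f) (i - 1) = Some rho ->
    1 <= j -> j < length (conds rho) ->
    nth_error (conds rho) j = Some (a, b) ->   (* a = a_{j+1} *)
    length xs = mf f ->
    linear (Fun (HAux f i j) (LA rho ++ repl (map Var xs) i (firstn j (BS rho)))) ->
    xi_rule (Fun (HAux f i j) (LA rho ++ repl (map Var xs) i (firstn j (BS rho))))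
            (Fun (HAux f i (S j))
                 (LA rho ++ repl (map Var xs) i (firstn j (BS rho) ++ [xiT a]))) 0
| xr5 f i rho xs j a b v :
    1 <= i -> nth_error (Rs f) (i - 1) = Some rho ->
    1 <= j -> j <= length (conds rho) ->
    nth_error (conds rho) (j - 1) = Some (a, b) ->   (* b = b_j *)
    ap b v ->
    length xs = mf f ->
    linear (Fun (HAux f i j) (LA rho ++ repl (map Var xs) i (firstn (j - 1) (BS rho) ++ [v]))) ->
    xi_rule (Fun (HAux f i j) (LA rho ++ repl (map Var xs) i (firstn (j - 1) (BS rho) ++ [v])))
            (Fun (HF f) (LA rho ++ repl (map Var xs) i [hbot])) 0
| xr6 f i rho xs ys j lj v :
    1 <= i -> nth_error (Rs f) (i - 1) = Some rho ->
    1 <= j -> nth_error (lhs_args rho) (j - 1) = Some lj ->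
    ap lj v ->
    length xs = mf f -> length ys = ar f ->
    linear (Fun (HF f) (repl (map Var ys) j [v] ++ repl (map Var xs) i [htop])) ->
    xi_rule (Fun (HF f) (repl (map Var ys) j [v] ++ repl (map Var xs) i [htop]))
            (Fun (HF f) (repl (map Var ys) j [v] ++ repl (map Var xs) i [hbot])) 0.

Inductive hstep (nu : hsym F -> nat -> Prop) :
    term (hsym F) -> term (hsym F) -> nat -> Prop :=
| hstep_root l r c sg : xi_rule l r c -> hstep nu (subst sg l) (subst sg r) c
| hstep_ctx g ls s t rs c :
    nu g (S (length ls)) -> hstep nu s t c ->
    hstep nu (Fun g (ls ++ s :: rs)) (Fun g (ls ++ t :: rs)) c.

Inductive hsteps (nu : hsym F -> nat -> Prop) :
    term (hsym F) -> term (hsym F) -> nat -> Prop :=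
| hsteps_refl s : hsteps nu s s 0
| hsteps_step s t u c1 c2 : hstep nu s t c1 -> hsteps nu t u c2 -> hsteps nu s u (c1 + c2).

Definition hinf (nu : hsym F -> nat -> Prop) (s : term (hsym F)) : Prop :=
  exists sq : nat -> term (hsym F), sq 0 = s /\ forall i, exists c, hstep nu (sq i) (sq (S i)) c.

Definition dh_nu (nu : hsym F -> nat -> Prop) (s : term (hsym F)) : enat :=
  esup (fun x => (exists t c, hsteps nu s t c /\ x = fin c) \/ (x = inf /\ hinf nu s)).

Definition hbasic (s : term (hsym F)) : Prop :=
  allsyms hsym_ok s /\ vars s = [] /\
  exists g ss, s = Fun g ss /\
    match g with
    | HF f => is_defined f
    | HAux f _ _ => is_defined f
    | _ => False
    end /\
    Forall (allsyms (fun h _ => match h with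
                                | HF c => is_constructor c
                                | HBot | HTop => True
                                | HAux _ _ _ => False
                                end)) ss.

Definition hsize (s : term (hsym F)) : nat :=
  wsize (fun h => match h with HTop => 0 | _ => 1 end) s.

Definition rc (nu : hsym F -> nat -> Prop) (n : nat) : enat :=
  esup (fun x => exists s, hbasic s /\ hsize s <= n /\ x = dh_nu nu s).

End CCTRS.

(* Main.v *)
Require Import Defs.
From Stdlib Require Import List Arith Lia Classical ClassicalEpsilon.
Import ListNotations.

Section TI.
Context {S : Type} (P : term S -> Prop)
  (HV : forall x, P (Var x))
  (HFn : forall g ts, Forall P ts -> P (Fun g ts)).
Fixpoint term_ind2 (t : term S) : P t :=
  match t with
  | Var x => HV x
  | Fun g ts => HFn g ts ((fix go (l : list (term S)) : Forall P l :=
        match l with [] => Forall_nil _ | u :: l' => Forall_cons _ (term_ind2 u) (go l') end) ts)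
  end.
End TI.

Lemma ele_refl x : ele x x.
Proof. destruct x; simpl; auto. Qed.
Lemma ele_trans x y z : ele x y -> ele y z -> ele x z.
Proof. destruct x, y, z; simpl; intros; auto; try lia; contradiction. Qed.

Lemma lub_bounded N : forall P, (forall y, P y -> ele y (fin N)) -> exists x, is_lub P x.
Proof.
  induction N as [|N IH]; intros P HP.
  - exists (fin 0). split.
    + intros y Hy. apply HP in Hy. destruct y; simpl in *; auto.
    + intros z _. destruct z; simpl; auto. lia.
  - destruct (classic (P (fin (S N)))) as [H|H].
    + exists (fin (S N)). split; auto.
    + apply IH. intros y Hy. pose proof (HP y Hy). destruct y; simpl in *; auto.
      destruct (Nat.eq_dec n (S N)); [subst; contradiction|lia].
Qed.

Lemma lub_exists P : exists x, is_lub P x.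
Proof.
  destruct (classic (exists N, forall y, P y -> ele y (fin N))) as [[N HN]|H].
  - eapply lub_bounded; eauto.
  - exists inf. split.
    + intros; destruct y; simpl; auto.
    + intros z Hz. destruct z; simpl; auto. exfalso; apply H; eauto.
Qed.

Lemma esup_spec P : is_lub P (esup P).
Proof.
  unfold esup. apply epsilon_spec. apply lub_exists.
Qed.

Lemma esup_mono (P Q : enat -> Prop) :
  (forall y, P y -> exists y', Q y' /\ ele y y') -> ele (esup P) (esup Q).
Proof.
  intros H. destruct (esup_spec P) as [_ HP]. apply HP.
  intros y Hy. destruct (H y Hy) as [y' [Hq Hle]].
  destruct (esup_spec Q) as [HQ _]. eapply ele_trans; eauto.
Qed.

Lemma allsyms_Fun {Sy} (P : Sy -> nat -> Prop) g ts :
  allsyms P (Fun g ts) <-> P g (length ts) /\ forall u, In u ts -> allsyms P u.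
Proof.
  simpl. split.
  - intros [H1 H2]. split; auto. clear H1. induction ts; simpl in *; [tauto|].
    destruct H2. intros u [<-|Hu]; auto.
  - intros [H1 H2]. split; auto. clear H1. induction ts; simpl in *; auto.
Qed.

Lemma subst_ext {Sy} (s1 s2 : nat -> term Sy) t :
  (forall x, In x (vars t) -> s1 x = s2 x) -> subst s1 t = subst s2 t.
Proof.
  induction t as [y|g ts IH] using term_ind2; simpl; intros Hs; auto.
  f_equal. induction IH as [|u ts Hu IH' IHl]; simpl in *; auto.
  rewrite Hu, IHl; auto; intros; apply Hs; apply in_or_app; auto.
Qed.

Lemma subst_id {Sy} (s : nat -> term Sy) t :
  (forall x, In x (vars t) -> s x = Var x) -> subst s t = t.
Proof.
  induction t as [y|g ts IH] using term_ind2; simpl; intros Hs; auto.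
  f_equal. induction IH as [|u ts Hu IH' IHl]; simpl in *; auto.
  rewrite Hu, IHl; auto; intros; apply Hs; apply in_or_app; auto.
Qed.

Lemma in_vars_subterm {Sy} (t : term Sy) x :
  In x (vars t) -> exists p, subterm_at t p = Some (Var x).
Proof.
  induction t as [y|g ts IH] using term_ind2; simpl; intros Hx.
  - destruct Hx as [<-|[]]. exists []; auto.
  - apply in_flat_map in Hx as [u [Hu Hx]].
    apply In_nth_error in Hu as [k Hk].
    rewrite Forall_forall in IH. destruct (IH u (nth_error_In _ _ Hk) Hx) as [p Hp].
    exists (S k :: p). simpl. rewrite Hk. auto.
Qed.

Lemma vars_subterm {Sy} (t : term Sy) p x :
  subterm_at t p = Some (Var x) -> In x (vars t).
Proof.
  revert t; induction p as [|i p IH]; intros t H; simpl in H.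
  - inversion H; subst; simpl; auto.
  - destruct t; try discriminate. destruct i; try discriminate.
    destruct (nth_error l i) eqn:E; try discriminate.
    simpl. apply in_flat_map. exists t; split; eauto using nth_error_In.
Qed.

Definition repl' := @repl.

Lemma repl_nth {A} (l : list A) i d : i < length l -> repl l (S i) [nth i l d] = l.
Proof.
  unfold repl. intros H. replace (S i - 1) with i by lia.
  revert l H; induction i; intros l H; destruct l; simpl in *; try lia; auto.
  rewrite IHi; auto; lia.
Qed.

Lemma map_repl {A B} (f : A -> B) l i us : map f (repl l i us) = repl (map f l) i (map f us).
Proof. unfold repl. rewrite !map_app, firstn_map, skipn_map. auto. Qed.

Lemma length_repl {A} (l : list A) i us : 1 <= i <= length l ->
  length (repl l i us) = length l - 1 + length us.
Proof.
  unfold repl. intros H. rewrite !length_app, length_firstn, length_skipn. lia.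
Qed.

Lemma flat_map_repl {A B} (f : A -> list B) l i us :
  flat_map f (repl l i us) = flat_map f (firstn (i-1) l) ++ flat_map f us ++ flat_map f (skipn i l).
Proof. unfold repl. rewrite !flat_map_app. auto. Qed.

Lemma skipn_S_tl {A} (l : list A) i : skipn (S i) l = tl (skipn i l).
Proof. revert l; induction i; intros [|a l]; simpl; auto. apply IHi. Qed.

Lemma NoDup_firstn_skipn {A} (l : list A) i : NoDup l -> NoDup (firstn i l ++ skipn (S i) l).
Proof.
  intros H. rewrite skipn_S_tl. rewrite <- (firstn_skipn i l) in H.
  destruct (skipn i l) eqn:E; simpl.
  - rewrite app_nil_r in *; auto.
  - eapply NoDup_remove_1; eauto.
Qed.

Lemma firstn_In {A} n (l : list A) x : In x (firstn n l) -> In x l.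
Proof. intros H. rewrite <- (firstn_skipn n l). apply in_or_app; auto. Qed.
Lemma skipn_In {A} n (l : list A) x : In x (skipn n l) -> In x l.
Proof. intros H. rewrite <- (firstn_skipn n l). apply in_or_app; auto. Qed.

Section Main.
Context {F : Type} (ar : F -> nat) (Rs : F -> list (crule F)) (ups : F -> nat -> Prop).

Definition symF (s : lsym F) : F := match s with LC c => c | LD f _ => f end.
Definition slot (L : list nat) (m : nat) : term (hsym F) :=
  if existsb (Nat.eqb m) L then htop else hbot.
Definition slots (s : lsym F) : list (term (hsym F)) :=
  match s with
  | LC c => repeat htop (mf Rs c)
  | LD f L => map (slot L) (seq 0 (mf Rs f))
  end.
Fixpoint img (t : term (lsym F)) : term (hsym F) :=
  match t with Var x => Var x | Fun s ts => Fun (HF (symF s)) (map img ts ++ slots s) end.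
Definition nu := mu_ups ar ups.

Inductive Cst : term (lsym F) -> Prop :=
| Cst_var x : Cst (Var x)
| Cst_fun c ts : is_constructor Rs c -> length ts = ar c -> (forall u, In u ts -> Cst u) ->
    Cst (Fun (LC c) ts).

Inductive G : term (lsym F) -> Prop :=
| G_var x : G (Var x)
| G_fun s ts : length ts = ar (symF s) -> (forall c, s = LC c -> is_constructor Rs c) ->
    (forall k u, nth_error ts k = Some u -> G u /\ (~ ups (symF s) (S k) -> Cst u)) ->
    G (Fun s ts).

Definition wfU : term (lsym F) -> Prop := allsyms (fun s n => n = ar (symF s)).

Lemma map_subst_repeat {S} (th : nat -> term S) (x : term S) n :
  vars x = [] -> map (subst th) (repeat x n) = repeat x n.
Proof.
  intros H. induction n; simpl; auto. rewrite IHn. f_equal. apply subst_id. rewrite H; simpl; tauto.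
Qed.

Lemma slots_full f : map (slot (seq 0 (mf Rs f))) (seq 0 (mf Rs f)) = repeat htop (mf Rs f).
Proof.
  apply (@nth_ext _ _ _ hbot hbot).
  - rewrite length_map, length_seq, repeat_length; auto.
  - intros n Hn. rewrite length_map, length_seq in Hn.
    rewrite (nth_indep _ _ (slot (seq 0 (mf Rs f)) 0)) by (rewrite length_map, length_seq; auto).
    rewrite map_nth, seq_nth by auto. rewrite nth_repeat_lt by auto.
    unfold slot. simpl. replace (existsb (Nat.eqb n) (seq 0 (mf Rs f))) with true; auto.
    symmetry. apply existsb_exists. exists n. split; [apply in_seq; lia|apply Nat.eqb_refl].
Qed.

Lemma img_lsub sg t : img (lsub Rs sg t) = subst (fun x => img (sg x)) (xiT Rs t).
Proof.
  unfold lsub, xiT. induction t as [x|g ts IH] using term_ind2; simpl; auto.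
  rewrite map_app. rewrite map_subst_repeat by reflexivity.
  assert (Hm : map img (map (subst sg) (map (label Rs) ts)) =
               map (subst (fun x => img (sg x))) (map (xi Rs htop) ts)).
  { induction IH; simpl; auto. f_equal; auto. }
  destruct (Rs g) eqn:E; simpl; rewrite Hm; auto.
  f_equal. f_equal. unfold mf in *. rewrite E in *.
  pose proof (slots_full g) as Hs. unfold mf in Hs. rewrite E in Hs. exact Hs.
Qed.

Lemma Cst_G t : Cst t -> G t.
Proof.
  induction t as [x|g ts IH] using term_ind2; intros H; inversion H; subst; constructor; auto.
  - intros c0 Hc; inversion Hc; subst; auto.
  - intros k u Hk. rewrite Forall_forall in IH. assert (In u ts) by (eapply nth_error_In; eauto).
    split; auto.
Qed.

Lemma G_arg s ts k u : G (Fun s ts) -> nth_error ts k = Some u -> G u.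
Proof. intros H Hk. inversion H; subst. apply (H4 k u Hk). Qed.

Lemma G_in s ts u : G (Fun s ts) -> In u ts -> G u.
Proof. intros H Hu. apply In_nth_error in Hu as [k Hk]. eapply G_arg; eauto. Qed.

Lemma Cst_in c ts u : Cst (Fun c ts) -> In u ts -> Cst u.
Proof. intros H Hu. inversion H; subst; auto. Qed.

Lemma lstep_not_Cst s t c : lstep Rs s t c -> ~ Cst s.
Proof.
  induction 1; intros HC; inversion HC; subst.
  apply IHlstep. eapply Cst_in; eauto. apply in_or_app; simpl; auto.
Qed.

Lemma lcond_not_Cst s t : lcond Rs s t -> ~ Cst s.
Proof.
  induction 1.
  - destruct H. intros HC; inversion HC.
  - intros HC. apply IHlcond. inversion HC; subst; auto.
Qed.


Definition labsym (g : F) : lsym F :=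
  match Rs g with [] => LC g | _ => LD g (seq 0 (length (Rs g))) end.

Lemma symF_labsym g : symF (labsym g) = g.
Proof. unfold labsym; destruct (Rs g); auto. Qed.

Lemma lsub_Fun sg g ts : lsub Rs sg (Fun g ts) = Fun (labsym g) (map (lsub Rs sg) ts).
Proof. unfold lsub, labsym. simpl. rewrite map_map. auto. Qed.

Lemma lsub_Var sg x : lsub Rs sg (Var x) = sg x.
Proof. reflexivity. Qed.

Lemma CT sg t : wf ar t -> cterm Rs t -> (forall x, In x (vars t) -> Cst (sg x)) ->
  Cst (lsub Rs sg t).
Proof.
  induction t as [x|g ts IH] using term_ind2; intros Hw Hc Hv.
  - apply Hv; simpl; auto.
  - rewrite lsub_Fun. unfold wf, cterm in *. apply allsyms_Fun in Hw as [Hw1 Hw2].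
    apply allsyms_Fun in Hc as [Hc1 Hc2].
    unfold labsym. unfold is_constructor in Hc1. rewrite Hc1. constructor.
    + unfold is_constructor; auto.
    + rewrite length_map; auto.
    + intros u' Hu'. apply in_map_iff in Hu' as [u [<- Hu]].
      rewrite Forall_forall in IH. apply IH; auto.
      intros x Hx; apply Hv. simpl. apply in_flat_map; eauto.
Qed.

Lemma cterm_pos t : (forall p g us, subterm_at t p = Some (Fun g us) -> ~ is_defined Rs g) ->
  cterm Rs t.
Proof.
  induction t as [x|g ts IH] using term_ind2; intros H; [unfold cterm; simpl; auto|].
  unfold cterm. apply allsyms_Fun. split.
  - specialize (H [] g ts eq_refl). unfold is_defined, is_constructor in *.
    destruct (Rs g); auto. exfalso; apply H; discriminate.
  - intros u Hu. apply In_nth_error in Hu as [k Hk]. rewrite Forall_forall in IH.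
    apply IH. eapply nth_error_In; eauto.
    intros p g' us Hp. apply (H (S k :: p) g' us). simpl. rewrite Hk. auto.
Qed.

Lemma GT (Q : nat -> Prop) sg t : wf ar t ->
  (forall p u, subterm_at t p = Some u ->
     ((exists g us, u = Fun g us /\ is_defined Rs g) \/ (exists x, u = Var x /\ Q x)) ->
     active ups t p) ->
  (forall x, In x (vars t) -> G (sg x)) ->
  (forall x, In x (vars t) -> ~ Q x -> Cst (sg x)) ->
  G (lsub Rs sg t).
Proof.
  induction t as [x|g ts IH] using term_ind2; intros Hw Ha Hv Hc.
  - apply Hv; simpl; auto.
  - rewrite lsub_Fun. unfold wf in Hw. apply allsyms_Fun in Hw as [Hw1 Hw2].
    constructor.
    + rewrite length_map, symF_labsym; auto.
    + intros c Hc'. unfold labsym in Hc'. unfold is_constructor.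
      destruct (Rs g) eqn:E; inversion Hc'; subst; auto.
    + intros k u' Hk. rewrite nth_error_map in Hk.
      destruct (nth_error ts k) as [u|] eqn:Eu; inversion Hk; subst; clear Hk.
      rewrite symF_labsym. rewrite Forall_forall in IH.
      assert (Hin : In u ts) by (eapply nth_error_In; eauto).
      assert (Hvu : forall x, In x (vars u) -> In x (vars (Fun g ts))).
      { intros x Hx. simpl. apply in_flat_map; eauto. }
      split.
      * apply (IH u Hin).
        -- apply Hw2; auto.
        -- intros p w Hp Hd. specialize (Ha (S k :: p) w). simpl in Ha. rewrite Eu in Ha.
           apply Ha; auto.
        -- intros; apply Hv, Hvu; auto.
        -- intros; apply Hc; auto.
      * intros Hnu. apply CT.
        -- apply Hw2; auto.
        -- apply cterm_pos. intros p g' us Hp Hd. apply Hnu.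
           specialize (Ha (S k :: p) (Fun g' us)). simpl in Ha. rewrite Eu in Ha.
           apply Ha; eauto.
        -- intros x Hx. apply Hc; auto. intros HQ.
           destruct (in_vars_subterm _ _ Hx) as [p Hp]. apply Hnu.
           specialize (Ha (S k :: p) (Var x)). simpl in Ha. rewrite Eu in Ha.
           apply Ha; eauto.
Qed.

Lemma Cst_lsub_var sg t q x : Cst (lsub Rs sg t) -> subterm_at t q = Some (Var x) -> Cst (sg x).
Proof.
  revert t; induction q as [|i q IH]; intros t HC Hq; simpl in Hq.
  - inversion Hq; subst. auto.
  - destruct t as [|g ts]; try discriminate. destruct i; try discriminate.
    destruct (nth_error ts i) as [u|] eqn:E; try discriminate.
    apply (IH u); auto. rewrite lsub_Fun in HC. eapply Cst_in; eauto.
    apply in_map. eapply nth_error_In; eauto.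
Qed.

Lemma G_lsub_var sg t q x : G (lsub Rs sg t) -> subterm_at t q = Some (Var x) -> G (sg x).
Proof.
  revert t; induction q as [|i q IH]; intros t HC Hq; simpl in Hq.
  - inversion Hq; subst. auto.
  - destruct t as [|g ts]; try discriminate. destruct i; try discriminate.
    destruct (nth_error ts i) as [u|] eqn:E; try discriminate.
    apply (IH u); auto. rewrite lsub_Fun in HC. eapply G_in; eauto.
    apply in_map. eapply nth_error_In; eauto.
Qed.

Lemma G_lsub_inactive sg t q x : G (lsub Rs sg t) -> subterm_at t q = Some (Var x) ->
  ~ active ups t q -> Cst (sg x).
Proof.
  revert t; induction q as [|i q IH]; intros t HC Hq Ha; simpl in Hq.
  - exfalso; apply Ha; simpl; auto.
  - destruct t as [|g ts]; try discriminate. destruct i; try discriminate.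
    destruct (nth_error ts i) as [u|] eqn:E; try discriminate.
    simpl in Ha. rewrite E in Ha. rewrite lsub_Fun in HC. inversion HC; subst.
    assert (Hn : nth_error (map (lsub Rs sg) ts) i = Some (lsub Rs sg u))
      by (rewrite nth_error_map, E; auto).
    destruct (H3 _ _ Hn) as [HG HCst]. rewrite symF_labsym in HCst.
    destruct (classic (ups g (S i))) as [Hu|Hu].
    + apply (IH u); auto.
    + eapply Cst_lsub_var; eauto.
Qed.

Lemma G_relabel f L L' ts : G (Fun (LD f L) ts) -> G (Fun (LD f L') ts).
Proof.
  intros H; inversion H; subst. constructor; auto. intros c Hc; discriminate.
Qed.

Hypothesis Hstrong : strong_cctrs ar Rs.
Hypothesis Husable : usable Rs ups.

Lemma rule_facts f rho : In rho (Rs f) ->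
    let bs := map snd (conds rho) in
    let bs0 := lhs rho :: bs in
    lhs_f rho = f /\
    wf ar (lhs rho) /\ wf ar (rhs rho) /\
    Forall (fun c => wf ar (fst c) /\ wf ar (snd c)) (conds rho) /\
    Forall (cterm Rs) (lhs_args rho) /\ Forall (cterm Rs) bs /\
    (forall i j u v, i <> j -> nth_error bs0 i = Some u -> nth_error bs0 j = Some v ->
        disjoint (vars u) (vars v)) /\
    incl (vars (rhs rho)) (vars (lhs rho) ++ flat_map vars bs) /\
    (forall i a b, nth_error (conds rho) i = Some (a, b) ->
        incl (vars a) (vars (lhs rho) ++ flat_map vars (firstn i bs))) /\
    linear (lhs rho) /\ Forall linear bs.
Proof. intros Hin. destruct (Hstrong f) as [_ H]. apply H; auto. Qed.

Lemma Rs_defined f rho : In rho (Rs f) -> is_defined Rs f.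
Proof. intros H Hn; rewrite Hn in H; destruct H. Qed.

Lemma cond_G f rho L sg i0 ai :
  In rho (Rs f) ->
  G (Fun (LD f L) (map (lsub Rs sg) (lhs_args rho))) ->
  (forall j a b, j < i0 -> nth_error (conds rho) j = Some (a, b) -> G (lsub Rs sg b)) ->
  nth_error (map fst (conds rho) ++ [rhs rho]) i0 = Some ai ->
  G (lsub Rs sg ai).
Proof.
  intros Hin HG Hb Hai.
  destruct (rule_facts f rho Hin) as (Hf & Hwl & Hwr & Hwc & _ & _ & _ & Hvr & Hvc & _ & _).
  assert (HGl : G (lsub Rs sg (lhs rho))).
  { unfold lhs. rewrite lsub_Fun. rewrite Hf. unfold labsym.
    destruct (Rs f) eqn:E; [destruct Hin|]. eapply G_relabel; eauto. }
  assert (Hwv : wf ar ai /\ incl (vars ai) (vars (lhs rho) ++ flat_map vars (firstn i0 (map snd (conds rho))))).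
  { rewrite nth_error_app in Hai. destruct (Nat.ltb_spec i0 (length (map fst (conds rho)))).
    - rewrite nth_error_map in Hai. destruct (nth_error (conds rho) i0) as [[a b]|] eqn:E; inversion Hai; subst.
      split.
      + rewrite Forall_forall in Hwc. apply (Hwc (ai, b)). eapply nth_error_In; eauto.
      + eapply Hvc; eauto.
    - rewrite length_map in *. destruct (i0 - length (conds rho)) eqn:E2; inversion Hai; subst.
      split; auto. rewrite firstn_all2 by (rewrite length_map; lia). auto.
      destruct n; discriminate. }
  destruct Hwv as [Hw Hv].
  pose proof (Husable f rho Hin) as HU. simpl in HU.
  specialize (HU i0 ai Hai).
  apply (GT (fun x => exists j bj q, j <= i0 /\ nth_error (lhs rho :: map snd (conds rho)) j = Some bj /\
                     active ups bj q /\ subterm_at bj q = Some (Var x))); auto.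
  - intros x Hx. apply Hv in Hx. apply in_app_or in Hx as [Hx|Hx].
    + destruct (in_vars_subterm _ _ Hx) as [q Hq]. eapply G_lsub_var; eauto.
    + apply in_flat_map in Hx as [b [Hb1 Hb2]].
      apply In_nth_error in Hb1 as [j Hj]. rewrite nth_error_firstn in Hj.
      destruct (Nat.ltb_spec j i0); try discriminate.
      rewrite nth_error_map in Hj. destruct (nth_error (conds rho) j) as [[a b']|] eqn:E; inversion Hj; subst.
      destruct (in_vars_subterm _ _ Hb2) as [q Hq]. eapply G_lsub_var; [|exact Hq].
      eapply Hb; eauto.
  - intros x Hx HQ. apply Hv in Hx. apply in_app_or in Hx as [Hx|Hx].
    + destruct (in_vars_subterm _ _ Hx) as [q Hq]. eapply G_lsub_inactive; eauto.
      intros Hact. apply HQ. exists 0, (lhs rho), q. repeat split; auto; lia.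
    + apply in_flat_map in Hx as [b [Hb1 Hb2]].
      apply In_nth_error in Hb1 as [j Hj]. rewrite nth_error_firstn in Hj.
      destruct (Nat.ltb_spec j i0); try discriminate.
      rewrite nth_error_map in Hj. destruct (nth_error (conds rho) j) as [[a b']|] eqn:E; inversion Hj; subst.
      destruct (in_vars_subterm _ _ Hb2) as [q Hq]. eapply G_lsub_inactive; [|exact Hq|].
      { eapply Hb; eauto. }
      intros Hact. apply HQ. exists (S j). eexists. exists q. split; [lia|].
      split; [simpl; rewrite nth_error_map, E; reflexivity|]. split; eauto.
Qed.


Lemma erase_Fun s us : erase (Fun s us) = Fun (symF s) (map erase us).
Proof. destruct s; reflexivity. Qed.

Lemma vars_erase (u : term (lsym F)) : vars (erase u) = vars u.
Proof.
  induction u as [x|s us IH] using term_ind2; [reflexivity|].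
  rewrite erase_Fun. simpl. induction IH; simpl; auto. rewrite H, IHIH; auto.
Qed.

Lemma NoDup_app_disj {A} (l1 l2 : list A) x : NoDup (l1 ++ l2) -> In x l1 -> In x l2 -> False.
Proof.
  induction l1; simpl; intros H H1 H2; auto. inversion H as [|a' l' Hn Hnd]; subst.
  destruct H1 as [<-|H1]; eauto. apply Hn, in_or_app; auto.
Qed.

Lemma NoDup_mid {A} (l1 v l2 : list A) : NoDup (l1 ++ l2) -> NoDup v ->
  (forall x, In x v -> In x (l1 ++ l2) -> False) -> NoDup (l1 ++ v ++ l2).
Proof.
  induction l1 as [|a l1 IH]; simpl; intros H Hv Hd.
  - apply NoDup_app; auto.
  - inversion H as [|a' l' Hn Hnd]; subst. constructor.
    + intros Hin. apply in_app_or in Hin as [Hin|Hin]; [apply Hn, in_or_app; auto|].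
      apply in_app_or in Hin as [Hin|Hin]; [|apply Hn, in_or_app; auto].
      eapply Hd; eauto.
    + apply IH; auto. intros x Hx Hx'. eapply Hd; eauto.
Qed.

Definition unif_id (th : nat -> term F) (xs ys : list nat) : Prop :=
  forall y, ~ In y xs -> ~ In y ys -> th y = Var y.

Lemma unif_list (us : list (term (lsym F))) (bs : list (term F)) :
  length us = length bs ->
  (forall k u b, nth_error us k = Some u -> nth_error bs k = Some b ->
     exists th, subst th (erase u) = subst th b /\ unif_id th (vars u) (vars b)) ->
  NoDup (flat_map vars us) -> NoDup (flat_map vars bs) ->
  disjoint (flat_map vars us) (flat_map vars bs) ->
  exists th, map (fun u => subst th (erase u)) us = map (subst th) bs /\
    unif_id th (flat_map vars us) (flat_map vars bs).
Proof.
  revert bs; induction us as [|u us IH]; intros [|b bs] Hl Hp Hn1 Hn2 Hd; simpl in *; try discriminate.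
  - exists Var. split; auto. intros y _ _; auto.
  - destruct (Hp 0 u b eq_refl eq_refl) as [th1 [E1 I1]].
    destruct (IH bs) as [th2 [E2 I2]]; auto.
    + intros k u' b' H1 H2. apply (Hp (S k)); auto.
    + eapply NoDup_app_remove_l; eauto.
    + eapply NoDup_app_remove_l; eauto.
    + intros x Hx1 Hx2. apply (Hd x); apply in_or_app; auto.
    + exists (fun y => if in_dec Nat.eq_dec y (vars u ++ vars b) then th1 y else th2 y).
      split.
      * f_equal.
        -- rewrite (subst_ext _ th1), E1; [apply subst_ext|].
           ++ intros x Hx. destruct (in_dec Nat.eq_dec x (vars u ++ vars b)); auto.
              exfalso; apply n, in_or_app; auto.
           ++ intros x Hx. rewrite vars_erase in Hx.
              destruct (in_dec Nat.eq_dec x (vars u ++ vars b)); auto.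
              exfalso; apply n, in_or_app; auto.
        -- transitivity (map (fun u => subst th2 (erase u)) us).
           ++ apply map_ext_in. intros a Ha.
              apply subst_ext. intros x Hx. rewrite vars_erase in Hx.
              destruct (in_dec Nat.eq_dec x (vars u ++ vars b)) as [Hi|Hi]; auto.
              exfalso. assert (Hx' : In x (flat_map vars us)) by (apply in_flat_map; eauto).
              apply in_app_or in Hi as [Hi|Hi].
              ** eapply (NoDup_app_disj _ _ x Hn1); eauto.
              ** apply (Hd x); [apply in_or_app; auto|apply in_or_app; auto].
           ++ rewrite E2. apply map_ext_in. intros a Ha. symmetry.
              apply subst_ext. intros x Hx.
              destruct (in_dec Nat.eq_dec x (vars u ++ vars b)) as [Hi|Hi]; auto.
              exfalso. assert (Hx' : In x (flat_map vars bs)) by (apply in_flat_map; eauto).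
              apply in_app_or in Hi as [Hi|Hi].
              ** apply (Hd x); [apply in_or_app; auto|apply in_or_app; auto].
              ** eapply (NoDup_app_disj _ _ x Hn2); eauto.
      * intros y Hy1 Hy2. destruct (in_dec Nat.eq_dec y (vars u ++ vars b)) as [Hi|Hi].
        -- apply in_app_or in Hi as [Hi|Hi]; exfalso; [apply Hy1|apply Hy2]; apply in_or_app; auto.
        -- apply I2; intros H; [apply Hy1|apply Hy2]; apply in_or_app; auto.
Qed.

Inductive clash : term (lsym F) -> term F -> Prop :=
| clash_root s us g bs : symF s <> g -> clash (Fun s us) (Fun g bs)
| clash_arg s us g bs k u b : symF s = g -> nth_error us k = Some u -> nth_error bs k = Some b ->
    clash u b -> clash (Fun s us) (Fun g bs).

Lemma wfU_Fun s us : wfU (Fun s us) -> length us = ar (symF s) /\ forall u, In u us -> wfU u.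
Proof. unfold wfU. intros H. apply allsyms_Fun in H. auto. Qed.

Lemma wf_Fun g bs : wf ar (Fun g bs) -> length bs = ar g /\ forall u, In u bs -> wf ar u.
Proof. unfold wf. intros H. apply allsyms_Fun in H. auto. Qed.

Lemma noclash_unif u : forall b, ~ clash u b -> wfU u -> wf ar b -> NoDup (vars u) -> NoDup (vars b) ->
  disjoint (vars u) (vars b) ->
  exists th, subst th (erase u) = subst th b /\ unif_id th (vars u) (vars b).
Proof.
  induction u as [x|s us IH] using term_ind2; intros b Hc Hwu Hwb Hnu Hnb Hd.
  - exists (fun y => if Nat.eqb y x then b else Var y). split.
    + simpl. rewrite Nat.eqb_refl. symmetry. apply subst_id. intros y Hy.
      destruct (Nat.eqb_spec y x); auto. subst. exfalso. apply (Hd x); simpl; auto.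
    + intros y Hy _. destruct (Nat.eqb_spec y x); auto. subst; exfalso; apply Hy; simpl; auto.
  - destruct b as [y|g bs].
    + exists (fun z => if Nat.eqb z y then erase (Fun s us) else Var z). split.
      * transitivity (erase (Fun s us)).
        { apply subst_id. intros z Hz. rewrite vars_erase in Hz.
          destruct (Nat.eqb_spec z y); auto. subst. exfalso. apply (Hd y); simpl; auto. }
        simpl. rewrite Nat.eqb_refl. auto.
      * intros z _ Hz. destruct (Nat.eqb_spec z y); auto. subst; exfalso; apply Hz; simpl; auto.
    + assert (Hsg : symF s = g) by (destruct (classic (symF s = g)); auto; exfalso; apply Hc; constructor; auto).
      apply wfU_Fun in Hwu as [Hl1 Hwu]. apply wf_Fun in Hwb as [Hl2 Hwb].
      destruct (unif_list us bs) as [th [E I]]; auto.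
      * congruence.
      * intros k u b Hu Hb. rewrite Forall_forall in IH.
        apply IH; eauto using nth_error_In.
        -- intros Hc'. apply Hc. eapply clash_arg; eauto.
        -- eapply NoDup_app_remove_r. eapply NoDup_app_remove_l.
           rewrite <- (firstn_skipn_middle _ _ Hu) in Hnu. simpl in Hnu. rewrite flat_map_app in Hnu.
           simpl in Hnu. exact Hnu.
        -- eapply NoDup_app_remove_r. eapply NoDup_app_remove_l.
           rewrite <- (firstn_skipn_middle _ _ Hb) in Hnb. simpl in Hnb. rewrite flat_map_app in Hnb.
           simpl in Hnb. exact Hnb.
        -- intros x Hx1 Hx2. apply (Hd x); simpl; apply in_flat_map; eauto using nth_error_In.
      * exists th. split; auto. rewrite erase_Fun. simpl. rewrite Hsg, map_map. rewrite E. auto.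
Qed.

Lemma unif_clash f us bs : ~ unifiable (Fun f (map erase us)) (Fun f bs) ->
  Forall wfU us -> Forall (wf ar) bs -> length us = length bs ->
  NoDup (flat_map vars us) -> NoDup (flat_map vars bs) -> disjoint (flat_map vars us) (flat_map vars bs) ->
  exists k u b, nth_error us k = Some u /\ nth_error bs k = Some b /\ clash u b.
Proof.
  intros Hu Hw1 Hw2 Hl Hn1 Hn2 Hd. apply NNPP. intros Hno. apply Hu.
  destruct (unif_list us bs) as [th [E _]]; auto.
  - intros k u b H1 H2. rewrite Forall_forall in Hw1, Hw2. apply noclash_unif.
    + intros Hc; apply Hno; exists k, u, b; auto.
    + apply Hw1; eapply nth_error_In; eauto.
    + apply Hw2; eapply nth_error_In; eauto.
    + eapply NoDup_app_remove_r. eapply NoDup_app_remove_l.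
      rewrite <- (firstn_skipn_middle _ _ H1) in Hn1. rewrite flat_map_app in Hn1. exact Hn1.
    + eapply NoDup_app_remove_r. eapply NoDup_app_remove_l.
      rewrite <- (firstn_skipn_middle _ _ H2) in Hn2. rewrite flat_map_app in Hn2. exact Hn2.
    + intros x Hx1 Hx2. apply (Hd x); apply in_flat_map; eauto using nth_error_In.
  - exists th. simpl. rewrite !map_map. rewrite E. auto.
Qed.

Lemma unif_clash1 u b : ~ unifiable (erase u) b -> wfU u -> wf ar b -> NoDup (vars u) -> NoDup (vars b) ->
  disjoint (vars u) (vars b) -> clash u b.
Proof.
  intros Hu Hw1 Hw2 Hn1 Hn2 Hd. apply NNPP. intros Hno. apply Hu.
  destruct (noclash_unif u b) as [th [E _]]; auto. exists th; auto.
Qed.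


Lemma map_seq_nth {A B} (f : A -> B) (l : list A) d N :
  map (fun i => f (nth (i - N) l d)) (seq N (length l)) = map f l.
Proof.
  revert N; induction l as [|a l IH]; intros N; simpl; auto.
  rewrite Nat.sub_diag. f_equal. rewrite <- (IH (S N)). apply map_ext_in.
  intros i Hi. apply in_seq in Hi. replace (i - N) with (S (i - S N)) by lia. auto.
Qed.

Lemma flat_map_Var (l : list nat) : flat_map (@vars (hsym F)) (map Var l) = l.
Proof. induction l; simpl; auto. rewrite IHl; auto. Qed.

Lemma vars_Fun {S} (g : S) ts : vars (Fun g ts) = flat_map vars ts.
Proof. reflexivity. Qed.

Lemma flat_map_one {A B} (f : A -> list B) x : flat_map f [x] = f x.
Proof. simpl. apply app_nil_r. Qed.

Lemma map_const {A B} (x : B) (l : list A) : map (fun _ => x) l = repeat x (length l).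
Proof. induction l; simpl; auto. rewrite IHl; auto. Qed.

Lemma lnf_Fun s us : lnf Rs (Fun s us) ->
  (match s with LC c => is_constructor Rs c | LD f L => is_defined Rs f /\ L = [] end) /\
  forall u, In u us -> lnf Rs u.
Proof. unfold lnf; intros H; apply allsyms_Fun in H; auto. Qed.

Lemma cterm_Fun g bs : cterm Rs (Fun g bs) -> is_constructor Rs g /\ forall u, In u bs -> cterm Rs u.
Proof. unfold cterm; intros H; apply allsyms_Fun in H; auto. Qed.

Lemma slots_lnf s us : lnf Rs (Fun s us) -> slots s = repeat hbot (mf Rs (symF s)).
Proof.
  intros H. apply lnf_Fun in H as [H _]. destruct s as [c|f L]; simpl.
  - unfold is_constructor in H. unfold mf. rewrite H. reflexivity.
  - destruct H as [_ ->]. unfold slot. simpl. rewrite map_const, length_seq. auto.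
Qed.

Lemma img_subst_Fun tau s us :
  img (subst tau (Fun s us)) = Fun (HF (symF s)) (map (fun u => img (subst tau u)) us ++ slots s).
Proof. simpl. rewrite map_map. auto. Qed.

Lemma clash_ap u b tau : clash u b -> lnf Rs u -> wfU u -> wf ar b -> cterm Rs b ->
  forall N, exists v th, ap ar Rs b v /\ NoDup (vars v) /\ (forall x, In x (vars v) -> N <= x) /\
    subst th v = img (subst tau u).
Proof.
  induction 1 as [s us g bs Hne | s us g bs k u b Hsg Hu Hb Hc IH];
    intros Hl Hwu Hwb Hcb N.
  - apply wfU_Fun in Hwu as [Hlen _].
    exists (Fun (HF (symF s)) (map Var (seq N (ar (symF s))) ++ repeat hbot (mf Rs (symF s)))).
    exists (fun x => img (subst tau (nth (x - N) us (Var 0)))).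
    split; [|split; [|split]].
    + constructor; auto. rewrite length_seq; auto.
    + simpl. rewrite flat_map_app, flat_map_Var.
      replace (flat_map vars (repeat (@hbot F) (mf Rs (symF s)))) with (@nil nat).
      * rewrite app_nil_r. apply seq_NoDup.
      * induction (mf Rs (symF s)); simpl; auto.
    + intros x Hx. simpl in Hx. rewrite flat_map_app, flat_map_Var in Hx.
      apply in_app_or in Hx as [Hx|Hx].
      * apply in_seq in Hx; lia.
      * exfalso. induction (mf Rs (symF s)); simpl in Hx; auto.
    + rewrite img_subst_Fun. rewrite (slots_lnf s us Hl). simpl. f_equal.
      rewrite map_app, map_map. rewrite map_subst_repeat by reflexivity. f_equal.
      rewrite <- Hlen. simpl. apply (map_seq_nth (fun u => img (subst tau u))).
  - subst g.
    destruct (cterm_Fun _ _ Hcb) as [Hcon Hcb'].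
    destruct (wf_Fun _ _ Hwb) as [Hlb Hwb'].
    destruct (wfU_Fun _ _ Hwu) as [Hlu Hwu'].
    destruct (lnf_Fun _ _ Hl) as [Hls Hl'].
    assert (Hin_u : In u us) by (eapply nth_error_In; eauto).
    assert (Hin_b : In b bs) by (eapply nth_error_In; eauto).
    destruct (IH (Hl' u Hin_u) (Hwu' u Hin_u) (Hwb' b Hin_b) (Hcb' b Hin_b) (N + length bs))
      as [v [th [Hap [Hnd [Hge Hth]]]]].
    assert (Hk : k < length bs) by (apply nth_error_Some; congruence).
    exists (Fun (HF (symF s)) (repl (map Var (seq N (length bs))) (S k) [v])).
    exists (fun x => if x <? N + length bs then img (subst tau (nth (x - N) us (Var 0))) else th x).
    split; [|split; [|split]].
    + eapply ap_arg with (i := S k); eauto. simpl. rewrite Nat.sub_0_r. auto. lia.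
      try rewrite length_map; rewrite length_seq. auto.
    + rewrite vars_Fun, flat_map_repl, flat_map_one.
      rewrite firstn_map, skipn_map, !flat_map_Var. replace (S k - 1) with k by lia.
      apply NoDup_mid; auto.
      * apply NoDup_firstn_skipn, seq_NoDup.
      * intros x Hx Hx'. apply Hge in Hx. apply in_app_or in Hx' as [Hx'|Hx'];
          [apply firstn_In in Hx'|apply skipn_In in Hx']; apply in_seq in Hx'; lia.
    + intros x Hx. rewrite vars_Fun, flat_map_repl, flat_map_one in Hx.
      rewrite firstn_map, skipn_map, !flat_map_Var in Hx. replace (S k - 1) with k in Hx by lia.
      apply in_app_or in Hx as [Hx|Hx]; [apply firstn_In in Hx; apply in_seq in Hx; lia|].
      apply in_app_or in Hx as [Hx|Hx]; [apply Hge in Hx; lia|].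
      apply skipn_In in Hx; apply in_seq in Hx; lia.
    + rewrite img_subst_Fun.
      assert (Hsl : slots s = []).
      { destruct s as [c|f L]; simpl in *.
        - unfold mf. unfold is_constructor in Hls. rewrite Hls. auto.
        - destruct Hls as [Hd _]. subst. contradiction. }
      rewrite Hsl, app_nil_r. simpl. f_equal.
      rewrite map_repl. simpl. rewrite map_map. simpl.
      assert (Hv : subst (fun x => if x <? N + length bs then img (subst tau (nth (x - N) us (Var 0))) else th x) v
                   = img (subst tau u)).
      { rewrite <- Hth. apply subst_ext. intros x Hx. apply Hge in Hx.
        destruct (Nat.ltb_spec x (N + length bs)); auto; lia. }
      rewrite Hv.
      rewrite (map_ext_in _ (fun i => img (subst tau (nth (i - N) us (Var 0))))).
      2:{ intros x Hx. apply in_seq in Hx. destruct (Nat.ltb_spec x (N + length bs)); auto; lia. }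
      replace (length bs) with (length us) by congruence.
      rewrite (map_seq_nth (fun u => img (subst tau u))).
      replace (img (subst tau u)) with (nth k (map (fun u => img (subst tau u)) us) (img (subst tau u))).
      * apply repl_nth. rewrite length_map. congruence.
      * rewrite (map_nth (fun u => img (subst tau u)) us u k). rewrite (nth_error_nth us k u Hu). auto.
Qed.


Definition nuM : hsym F -> nat -> Prop := mu_ups ar ups.

Definition hplus (s t : term (hsym F)) (c : nat) : Prop :=
  exists m c1 c2, hstep ar Rs nuM s m c1 /\ hsteps ar Rs nuM m t c2 /\ c = c1 + c2.

Lemma hsteps_trans s t u c1 c2 : hsteps ar Rs nuM s t c1 -> hsteps ar Rs nuM t u c2 ->
  hsteps ar Rs nuM s u (c1 + c2).
Proof.
  induction 1 as [|s1 t1 u1 d1 d2 Hs Hss IH]; intros Hn; simpl; auto. rewrite <- Nat.add_assoc. econstructor; eauto.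
Qed.

Lemma hplus_steps s t u c1 c2 : hplus s t c1 -> hsteps ar Rs nuM t u c2 -> hplus s u (c1 + c2).
Proof.
  intros [m [d1 [d2 [H1 [H2 ->]]]]] H3. exists m, d1, (d2 + c2). split; auto. split; [|lia].
  eapply hsteps_trans; eauto.
Qed.

Lemma hplus_hsteps s t c : hplus s t c -> hsteps ar Rs nuM s t c.
Proof. intros [m [d1 [d2 [H1 [H2 ->]]]]]. econstructor; eauto. Qed.

Lemma hstep_hplus s t c : hstep ar Rs nuM s t c -> hplus s t c.
Proof. intros H. exists t, c, 0. split; auto. split; [constructor|lia]. Qed.

Lemma hsteps_ctx h ls s t rs c : nuM h (S (length ls)) -> hsteps ar Rs nuM s t c ->
  hsteps ar Rs nuM (Fun h (ls ++ s :: rs)) (Fun h (ls ++ t :: rs)) c.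
Proof.
  intros Hn. induction 1; [constructor|]. econstructor; eauto. constructor; auto.
Qed.

Lemma hplus_ctx h ls s t rs c : nuM h (S (length ls)) -> hplus s t c ->
  hplus (Fun h (ls ++ s :: rs)) (Fun h (ls ++ t :: rs)) c.
Proof.
  intros Hn [m [d1 [d2 [H1 [H2 ->]]]]]. exists (Fun h (ls ++ m :: rs)), d1, d2.
  split; [constructor; auto|]. split; auto. apply hsteps_ctx; auto.
Qed.

Lemma hstep_root' l r c th X Y : xi_rule ar Rs l r c -> subst th l = X -> subst th r = Y ->
  hstep ar Rs nuM X Y c.
Proof. intros H <- <-. constructor; auto. Qed.

Lemma vars_xiT t : vars (xiT Rs t) = vars t.
Proof.
  unfold xiT. induction t as [x|g ts IH] using term_ind2; simpl; auto.
  rewrite flat_map_app. replace (flat_map vars (repeat (@htop F) (mf Rs g))) with (@nil nat).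
  - rewrite app_nil_r. induction IH; simpl; auto. rewrite H, IHIH; auto.
  - induction (mf Rs g); simpl; auto.
Qed.

Lemma flat_map_xiT l : flat_map vars (map (xiT Rs) l) = flat_map vars l.
Proof. induction l as [|a l IH]; [reflexivity|]. cbn [map flat_map]. rewrite vars_xiT, IH. reflexivity. Qed.

Lemma nth_repl {A} (l : list A) i x m d : i < length l ->
  nth m (repl l (S i) [x]) d = if m =? i then x else nth m l d.
Proof.
  intros Hi. unfold repl. replace (S i - 1) with i by lia.
  destruct (Nat.ltb_spec m i).
  - rewrite app_nth1 by (rewrite length_firstn; lia). rewrite nth_firstn.
    destruct (Nat.ltb_spec m i); try lia. destruct (Nat.eqb_spec m i); try lia. auto.
  - rewrite app_nth2 by (rewrite length_firstn; lia). rewrite length_firstn.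
    replace (Nat.min i (length l)) with i by lia.
    destruct (Nat.eqb_spec m i).
    + subst. rewrite Nat.sub_diag. auto.
    + replace (m - i) with (S (m - S i)) by lia. change ([x] ++ skipn (S i) l) with (x :: skipn (S i) l). cbn [nth]. rewrite nth_skipn. f_equal. lia.
Qed.

Definition sl (f : F) (L : list nat) := map (slot L) (seq 0 (mf Rs f)).

Lemma length_sl f L : length (sl f L) = mf Rs f.
Proof. unfold sl. rewrite length_map, length_seq. auto. Qed.

Lemma sl_top f L i : In i L -> i < mf Rs f -> repl (sl f L) (S i) [htop] = sl f L.
Proof.
  intros HL Hi. replace htop with (nth i (sl f L) hbot) at 1.
  - apply repl_nth. rewrite length_sl; auto.
  - unfold sl. rewrite (nth_indep _ _ (slot L 0)) by (rewrite length_map, length_seq; auto).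
    rewrite map_nth, seq_nth by auto. simpl. unfold slot.
    replace (existsb (Nat.eqb i) L) with true; auto. symmetry. apply existsb_exists.
    exists i; split; auto. apply Nat.eqb_refl.
Qed.

Lemma sl_remove f L i : i < mf Rs f -> sl f (remove_idx i L) = repl (sl f L) (S i) [hbot].
Proof.
  intros Hi. apply (nth_ext _ _ hbot hbot).
  - rewrite length_repl by (rewrite length_sl; lia). rewrite !length_sl. simpl. lia.
  - intros m Hm. rewrite length_sl in Hm. rewrite nth_repl by (rewrite length_sl; auto).
    unfold sl. rewrite (nth_indep _ _ (slot (remove_idx i L) 0)) by (rewrite length_map, length_seq; auto).
    rewrite (nth_indep (map (slot L) _) _ (slot L 0)) by (rewrite length_map, length_seq; auto).
    rewrite !map_nth, !seq_nth by auto. simpl. unfold slot, remove_idx.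
    destruct (Nat.eqb_spec m i).
    + subst. replace (existsb (Nat.eqb i) (filter (fun j => negb (i =? j)) L)) with false; auto.
      symmetry. apply Bool.not_true_iff_false. intros H. apply existsb_exists in H as [y [Hy1 Hy2]].
      apply filter_In in Hy1 as [_ Hy1]. rewrite Hy2 in Hy1. discriminate.
    + replace (existsb (Nat.eqb m) (filter (fun j => negb (i =? j)) L)) with (existsb (Nat.eqb m) L); auto.
      apply Bool.eq_iff_eq_true. rewrite !existsb_exists. split.
      * intros [y [Hy1 Hy2]]. exists y. split; auto. apply filter_In. split; auto.
        apply Nat.eqb_eq in Hy2. subst. destruct (Nat.eqb_spec i y); auto.
      * intros [y [Hy1 Hy2]]. apply filter_In in Hy1 as [Hy1 _]. eauto.
Qed.

Lemma img_LD f L ts : img (Fun (LD f L) ts) = Fun (HF f) (map img ts ++ sl f L).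
Proof. reflexivity. Qed.

Lemma firstn_S_nth {A} (l : list A) j x : nth_error l j = Some x -> firstn (S j) l = firstn j l ++ [x].
Proof.
  revert l; induction j; intros [|a l] H; simpl in *; try discriminate.
  - inversion H; auto.
  - rewrite (IHj l H). auto.
Qed.

Definition allv (rho : crule F) : list nat :=
  vars (lhs rho) ++ vars (rhs rho) ++ flat_map (fun c => vars (fst c) ++ vars (snd c)) (conds rho).
Definition NB rho := S (list_max (allv rho)).

Lemma lt_NB rho x : In x (allv rho) -> x < NB rho.
Proof.
  intros H. unfold NB. assert (list_max (allv rho) <= list_max (allv rho)) as Hm by lia.
  apply list_max_le in Hm. rewrite Forall_forall in Hm. specialize (Hm x H). lia.
Qed.

Lemma allv_lhs rho x : In x (flat_map vars (lhs_args rho)) -> In x (allv rho).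
Proof. intros H. unfold allv. apply in_or_app. left. exact H. Qed.
Lemma allv_rhs rho x : In x (vars (rhs rho)) -> In x (allv rho).
Proof. intros H. unfold allv. apply in_or_app. right. apply in_or_app; auto. Qed.
Lemma allv_cond rho a b x : In (a, b) (conds rho) -> In x (vars a) \/ In x (vars b) -> In x (allv rho).
Proof.
  intros Hc H. unfold allv. apply in_or_app. right. apply in_or_app. right.
  apply in_flat_map. exists (a, b). split; auto. simpl. apply in_or_app. tauto.
Qed.

Definition th (f : F) (L : list nat) (rho : crule F) (sg : nat -> term (lsym F))
  (thv : nat -> term (hsym F)) (x : nat) : term (hsym F) :=
  if x <? NB rho then img (sg x)
  else if x <? NB rho + mf Rs f then nth (x - NB rho) (sl f L) hbot else thv x.

Definition xsv f rho := seq (NB rho) (mf Rs f).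

Definition IA rho sg := map (fun l => img (lsub Rs sg l)) (lhs_args rho).
Definition Bimg rho sg j := map (fun c => img (lsub Rs sg (snd c))) (firstn j (conds rho)).

Section Inst.
Variables (f : F) (L : list nat) (rho : crule F) (sg : nat -> term (lsym F)) (thv : nat -> term (hsym F)).
Let TH := th f L rho sg thv.

Lemma th_xi t : (forall x, In x (vars t) -> In x (allv rho)) -> subst TH (xiT Rs t) = img (lsub Rs sg t).
Proof.
  intros H. rewrite img_lsub. apply subst_ext. intros x Hx. rewrite vars_xiT in Hx.
  apply H, lt_NB in Hx. unfold TH, th. destruct (Nat.ltb_spec x (NB rho)); auto; lia.
Qed.

Lemma th_xs : map (subst TH) (map Var (xsv f rho)) = sl f L.
Proof.
  rewrite map_map. unfold xsv. transitivity (map (fun x => x) (sl f L)); [|apply map_id].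
  rewrite <- (map_seq_nth (fun x => x) (sl f L) hbot (NB rho)). rewrite length_sl.
  apply map_ext_in. intros x Hx. apply in_seq in Hx. simpl. unfold TH, th. destruct (Nat.ltb_spec x (NB rho)); try lia. destruct (Nat.ltb_spec x (NB rho + mf Rs f)); try lia. auto.
Qed.

Lemma th_LA : map (subst TH) (LA Rs rho) = IA rho sg.
Proof.
  unfold LA, IA. rewrite map_map. apply map_ext_in. intros l Hl. apply th_xi.
  intros x Hx. apply allv_lhs. apply in_flat_map; eauto.
Qed.

Lemma th_BS j : map (subst TH) (firstn j (BS Rs rho)) = Bimg rho sg j.
Proof.
  unfold BS, Bimg. rewrite firstn_map, map_map. apply map_ext_in. intros [a b] Hc. simpl.
  apply th_xi. intros x Hx. apply firstn_In in Hc. eapply allv_cond; eauto.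
Qed.

Lemma th_inst h i Y : subst TH (Fun h (LA Rs rho ++ repl (map Var (xsv f rho)) (S i) Y)) =
  Fun h (IA rho sg ++ repl (sl f L) (S i) (map (subst TH) Y)).
Proof.
  simpl. rewrite map_app, th_LA, map_repl, th_xs. auto.
Qed.

End Inst.

Lemma lin_inst f rho h i Y : i < mf Rs f ->
  NoDup (flat_map vars (lhs_args rho) ++ flat_map vars Y) ->
  (forall x, In x (flat_map vars (lhs_args rho) ++ flat_map vars Y) -> x < NB rho \/ NB rho + mf Rs f <= x) ->
  linear (Fun h (LA Rs rho ++ repl (map Var (xsv f rho)) (S i) Y)).
Proof.
  intros Hi Hn Hr. unfold linear. rewrite vars_Fun, flat_map_app, flat_map_repl.
  replace (S i - 1) with i by lia. rewrite firstn_map, skipn_map, !flat_map_Var.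
  assert (HLA : flat_map vars (LA Rs rho) = flat_map vars (lhs_args rho)).
  { unfold LA. apply flat_map_xiT. }
  rewrite HLA. rewrite app_assoc. apply NoDup_mid.
  - rewrite <- app_assoc. apply NoDup_app.
    + eapply NoDup_app_remove_r; eauto.
    + apply NoDup_firstn_skipn, seq_NoDup.
    + intros x Hx Hx'. assert (Hx2 : In x (xsv f rho)).
      { apply in_app_or in Hx' as [H|H]; [eapply firstn_In|eapply skipn_In]; eauto. }
      unfold xsv in Hx2. apply in_seq in Hx2.
      destruct (Hr x); [apply in_or_app; auto|lia|lia].
  - eapply NoDup_app_remove_l; eauto.
  - intros x Hx Hx'. apply in_app_or in Hx' as [Hx'|Hx'].
    + apply in_app_or in Hx' as [Hx'|Hx'].
      * eapply (NoDup_app_disj _ _ x Hn); eauto.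
      * assert (Hx2 : In x (xsv f rho)) by (eapply firstn_In; eauto).
        unfold xsv in Hx2. apply in_seq in Hx2.
        destruct (Hr x); [apply in_or_app; auto|lia|lia].
    + assert (Hx2 : In x (xsv f rho)) by (eapply skipn_In; eauto).
      unfold xsv in Hx2. apply in_seq in Hx2.
      destruct (Hr x); [apply in_or_app; auto|lia|lia].
Qed.


Lemma NoDup_flat_pw (l : list (term F)) : (forall t, In t l -> NoDup (vars t)) ->
  (forall i j u v, i <> j -> nth_error l i = Some u -> nth_error l j = Some v -> disjoint (vars u) (vars v)) ->
  NoDup (flat_map vars l).
Proof.
  induction l as [|a l IH]; intros H1 H2; simpl; [constructor|].
  apply NoDup_app.
  - apply H1; simpl; auto.
  - apply IH. intros; apply H1; simpl; auto. intros i j u v Hij Hu Hv. apply (H2 (S i) (S j)); auto.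
  - intros x Hx Hx'. apply in_flat_map in Hx' as [v [Hv Hxv]].
    apply In_nth_error in Hv as [j Hj]. apply (H2 0 (S j) a v) with (x := x); auto.
Qed.

Lemma rule_nodup f rho j : In rho (Rs f) ->
  NoDup (flat_map vars (lhs_args rho) ++ flat_map vars (firstn j (map snd (conds rho)))).
Proof.
  intros Hin. destruct (rule_facts f rho Hin) as (_ & _ & _ & _ & _ & _ & Hpw & _ & _ & Hl & Hlb).
  assert (H : NoDup (flat_map vars (lhs rho :: map snd (conds rho)))).
  { apply NoDup_flat_pw; auto. intros t [<-|Ht]; auto. rewrite Forall_forall in Hlb; apply Hlb; auto. }
  simpl in H. rewrite <- (firstn_skipn j (map snd (conds rho))) in H.
  rewrite flat_map_app, app_assoc in H. eapply NoDup_app_remove_r; eauto.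
Qed.

Lemma BS_eq rho : BS Rs rho = map (xiT Rs) (map snd (conds rho)).
Proof. unfold BS. rewrite map_map. auto. Qed.

Lemma flat_BS rho j : flat_map vars (firstn j (BS Rs rho)) = flat_map vars (firstn j (map snd (conds rho))).
Proof. rewrite BS_eq, firstn_map, flat_map_xiT. auto. Qed.

Lemma bound_rule rho j x : In x (flat_map vars (lhs_args rho) ++ flat_map vars (firstn j (map snd (conds rho)))) ->
  x < NB rho.
Proof.
  intros H. apply lt_NB. apply in_app_or in H as [H|H]; [apply allv_lhs; auto|].
  apply in_flat_map in H as [b [Hb Hx]]. apply firstn_In in Hb. apply in_map_iff in Hb as [[a b'] [<- Hc]].
  eapply allv_cond; eauto.
Qed.

Definition Tj f i rho L sg j X :=
  Fun (HAux f (S i) (S j)) (IA rho sg ++ repl (sl f L) (S i) (Bimg rho sg j ++ [X])).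

Lemma length_IA rho sg : length (IA rho sg) = length (lhs_args rho).
Proof. unfold IA; rewrite length_map; auto. Qed.

Lemma T_ctx f i rho L sg j X Y c : j <= length (conds rho) -> i < mf Rs f -> length (lhs_args rho) = ar f ->
  hsteps ar Rs nuM X Y c -> hsteps ar Rs nuM (Tj f i rho L sg j X) (Tj f i rho L sg j Y) c.
Proof.
  intros Hj Hi Hl H. unfold Tj, repl. replace (S i - 1) with i by lia.
  assert (E : forall Z, IA rho sg ++ firstn i (sl f L) ++ (Bimg rho sg j ++ [Z]) ++ skipn (S i) (sl f L) =
     (IA rho sg ++ firstn i (sl f L) ++ Bimg rho sg j) ++ Z :: skipn (S i) (sl f L)).
  { intros Z. rewrite <- !app_assoc. reflexivity. }
  rewrite !E. apply hsteps_ctx; auto.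
  unfold nuM. simpl. rewrite !length_app, length_IA, length_firstn, length_sl.
  unfold Bimg. rewrite length_map, length_firstn. lia.
Qed.

Lemma img_start f L rho sg :
  img (Fun (LD f L) (map (lsub Rs sg) (lhs_args rho))) = Fun (HF f) (IA rho sg ++ sl f L).
Proof. rewrite img_LD. unfold IA. rewrite map_map. auto. Qed.

Lemma rule_len f rho : In rho (Rs f) -> length (lhs_args rho) = ar f.
Proof.
  intros Hin. destruct (rule_facts f rho Hin) as (Hf & Hw & _).
  unfold lhs in Hw. apply wf_Fun in Hw as [Hw _]. rewrite Hf in Hw. auto.
Qed.

Lemma sum_firstn_S (cs : list nat) j c : nth_error cs j = Some c ->
  list_sum (firstn (S j) cs) = list_sum (firstn j cs) + c.
Proof. intros H. rewrite (firstn_S_nth _ _ _ H), list_sum_app. simpl. lia. Qed.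

Section Chain.
Variables (f : F) (L : list nat) (i : nat) (rho : crule F) (sg : nat -> term (lsym F)) (cs : list nat).
Hypothesis Hrho : nth_error (Rs f) i = Some rho.
Hypothesis HiL : In i L.

Lemma Hin_rho : In rho (Rs f).
Proof. eapply nth_error_In; eauto. Qed.
Lemma Hi_mf : i < mf Rs f.
Proof. unfold mf. apply nth_error_Some. congruence. Qed.

Lemma lin_Y Y : (forall x, In x (flat_map vars Y) -> In x (flat_map vars (lhs_args rho)) -> False) ->
  NoDup (flat_map vars (lhs_args rho) ++ flat_map vars Y) ->
  (forall x, In x (flat_map vars Y) -> x < NB rho \/ NB rho + mf Rs f <= x) ->
  forall h, linear (Fun h (LA Rs rho ++ repl (map Var (xsv f rho)) (S i) Y)).
Proof.
  intros _ Hn Hb h. apply lin_inst; auto using Hi_mf.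
  intros x Hx. apply in_app_or in Hx as [Hx|Hx]; auto.
  left. apply (bound_rule rho 0). apply in_or_app; auto.
Qed.

Lemma xi_rule2 a b : nth_error (conds rho) 0 = Some (a, b) ->
  xi_rule ar Rs (Fun (HF f) (LA Rs rho ++ repl (map Var (xsv f rho)) (S i) [htop]))
            (Fun (HAux f (S i) 1) (LA Rs rho ++ repl (map Var (xsv f rho)) (S i) [xiT Rs a])) 0.
Proof.
  intros H. apply xr2 with (b := b); auto; [lia| |unfold xsv; rewrite length_seq; auto|].
  - simpl. rewrite Nat.sub_0_r. auto.
  - apply lin_Y; simpl; try tauto. rewrite app_nil_r. pose proof (rule_nodup f rho 0 Hin_rho) as Hn; simpl in Hn; rewrite app_nil_r in Hn; exact Hn.
Qed.

Hypothesis HC : forall m a b c, m < length cs -> nth_error (conds rho) m = Some (a, b) -> nth_error cs m = Some c ->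
  hsteps ar Rs nuM (img (lsub Rs sg a)) (img (lsub Rs sg b)) c.

Lemma chain j : j < length (conds rho) -> j <= length cs -> forall a b, nth_error (conds rho) j = Some (a, b) ->
  hplus (img (Fun (LD f L) (map (lsub Rs sg) (lhs_args rho)))) (Tj f i rho L sg j (img (lsub Rs sg a)))
        (list_sum (firstn j cs)).
Proof.
  pose proof Hin_rho as Hin. pose proof Hi_mf as Himf.
  induction j as [|j IH]; intros Hj Hjc a b Hab.
  - apply hstep_hplus. eapply hstep_root' with (th := th f L rho sg Var); [eapply xi_rule2; eauto| |].
    + rewrite img_start, th_inst. cbn [map subst]. rewrite sl_top; auto.
    + rewrite th_inst. unfold Tj. simpl. f_equal. f_equal. f_equal. f_equal.
      apply th_xi. intros x Hx. eapply allv_cond; eauto using nth_error_In.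
  - destruct (nth_error (conds rho) j) as [[a0 b0]|] eqn:E0.
    2:{ apply nth_error_None in E0. lia. }
    destruct (nth_error cs j) as [c0|] eqn:Ec.
    2:{ apply nth_error_None in Ec. lia. }
    rewrite (sum_firstn_S _ _ _ Ec).
    replace (list_sum (firstn j cs) + c0) with (list_sum (firstn j cs) + c0 + 0) by lia.
    eapply hplus_steps; [eapply hplus_steps|].
    + apply (IH ltac:(lia) ltac:(lia) a0 b0 eq_refl).
    + apply T_ctx; [lia|exact Himf|apply rule_len; exact Hin|]. apply (HC j a0 b0 c0); auto; lia.
    + apply hplus_hsteps, hstep_hplus.
      eapply hstep_root' with (th := th f L rho sg Var).
      * apply xr4 with (f := f) (i := S i) (rho := rho) (xs := xsv f rho) (j := S j) (a := a) (b := b); auto; try lia.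
        -- simpl. rewrite Nat.sub_0_r. auto.
        -- unfold xsv; rewrite length_seq; auto.
        -- apply lin_Y.
           ++ intros x Hx Hx'. rewrite flat_BS in Hx. apply (NoDup_app_disj _ _ x (rule_nodup f rho (S j) Hin)); auto.
           ++ rewrite flat_BS. apply (rule_nodup f); auto.
           ++ intros x Hx. left. rewrite flat_BS in Hx. apply (bound_rule rho (S j)). apply in_or_app; auto.
      * rewrite th_inst, th_BS. unfold Tj, Bimg. rewrite (firstn_S_nth _ _ _ E0), map_app. auto.
      * rewrite th_inst, map_app, th_BS. unfold Tj. simpl.
        rewrite (th_xi f L rho sg Var a). reflexivity.
        intros x Hx. eapply allv_cond; eauto using nth_error_In.
Qed.


Lemma lin_BS n h : linear (Fun h (LA Rs rho ++ repl (map Var (xsv f rho)) (S i) (firstn n (BS Rs rho)))).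
Proof.
  pose proof Hin_rho as Hin.
  apply lin_Y.
  - intros x Hx Hx'. rewrite flat_BS in Hx. apply (NoDup_app_disj _ _ x (rule_nodup f rho n Hin)); auto.
  - rewrite flat_BS. apply (rule_nodup f); auto.
  - intros x Hx. left. rewrite flat_BS in Hx. apply (bound_rule rho n). apply in_or_app; auto.
Qed.

Lemma sim_succ : length cs = length (conds rho) ->
  hplus (img (Fun (LD f L) (map (lsub Rs sg) (lhs_args rho)))) (img (lsub Rs sg (rhs rho))) (1 + list_sum cs).
Proof.
  pose proof Hin_rho as Hin. pose proof Hi_mf as Himf. intros Hlen.
  destruct (length (conds rho)) as [|j] eqn:Ek.
  - destruct cs; [|discriminate].
    apply hstep_hplus. eapply hstep_root' with (th := th f L rho sg Var).
    + apply xr1 with (f := f) (i := S i) (rho := rho) (xs := xsv f rho); auto; try lia.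
      * simpl. rewrite Nat.sub_0_r. auto.
      * destruct (conds rho); auto; discriminate.
      * unfold xsv; rewrite length_seq; auto.
      * pose proof (lin_BS 0 (HF f)) as H. rewrite firstn_O in H.
        apply lin_Y; simpl; try tauto. rewrite app_nil_r.
        pose proof (rule_nodup f rho 0 Hin) as Hn; simpl in Hn; rewrite app_nil_r in Hn; exact Hn.
    + rewrite img_start, th_inst. cbn [map subst]. rewrite sl_top; auto.
    + apply th_xi. intros x Hx. apply allv_rhs; auto.
  - destruct (nth_error (conds rho) j) as [[a b]|] eqn:E0.
    2:{ apply nth_error_None in E0. lia. }
    destruct (nth_error cs j) as [c0|] eqn:Ec.
    2:{ apply nth_error_None in Ec. lia. }
    assert (Hs : list_sum cs = list_sum (firstn j cs) + c0).
    { rewrite <- (sum_firstn_S _ _ _ Ec). rewrite firstn_all2; auto. lia. }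
    rewrite Hs. replace (1 + (list_sum (firstn j cs) + c0)) with (list_sum (firstn j cs) + c0 + (1 + 0)) by lia.
    eapply hplus_steps; [eapply hplus_steps|].
    + apply (chain j ltac:(lia) ltac:(lia) a b E0).
    + apply T_ctx; [lia|exact Himf|apply rule_len; exact Hin|]. apply (HC j a b c0); auto; lia.
    + econstructor; [|constructor].
      eapply hstep_root' with (th := th f L rho sg Var).
      * apply xr3 with (f := f) (i := S i) (rho := rho) (xs := xsv f rho); auto; try lia.
        -- simpl. rewrite Nat.sub_0_r. auto.
        -- unfold xsv; rewrite length_seq; auto.
        -- pose proof (lin_BS (length (conds rho)) (HAux f (S i) (length (conds rho)))) as H.
           rewrite firstn_all2 in H; auto. unfold BS. rewrite length_map. lia.
      * rewrite Ek. rewrite th_inst.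
        replace (BS Rs rho) with (firstn (S j) (BS Rs rho)).
        2:{ apply firstn_all2. unfold BS. rewrite length_map. lia. }
        rewrite th_BS. unfold Tj, Bimg. rewrite (firstn_S_nth _ _ _ E0), map_app. auto.
      * apply th_xi. intros x Hx. apply allv_rhs; auto.
Qed.

Lemma sim_fail a b v thv c X :
  length cs < length (conds rho) -> nth_error (conds rho) (length cs) = Some (a, b) ->
  ap ar Rs b v -> NoDup (vars v) -> (forall x, In x (vars v) -> NB rho + mf Rs f <= x) ->
  subst thv v = X -> hsteps ar Rs nuM (img (lsub Rs sg a)) X c ->
  hplus (img (Fun (LD f L) (map (lsub Rs sg) (lhs_args rho))))
        (img (Fun (LD f (remove_idx i L)) (map (lsub Rs sg) (lhs_args rho)))) (list_sum cs + c).
Proof.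
  pose proof Hin_rho as Hin. pose proof Hi_mf as Himf. intros Hlt Hab Hap Hnv Hvb Hth Hst.
  set (j := length cs) in *.
  replace (list_sum cs) with (list_sum (firstn j cs)) by (rewrite firstn_all2; auto).
  replace (list_sum (firstn j cs) + c) with (list_sum (firstn j cs) + c + 0) by lia.
  eapply hplus_steps; [eapply hplus_steps|].
  - apply (chain j ltac:(lia) ltac:(lia) a b Hab).
  - apply T_ctx; [lia|exact Himf|apply rule_len; exact Hin|]. exact Hst.
  - apply hplus_hsteps, hstep_hplus.
    assert (Hv : subst (th f L rho sg thv) v = X).
    { rewrite <- Hth. apply subst_ext. intros x Hx. apply Hvb in Hx. unfold th.
      destruct (Nat.ltb_spec x (NB rho)); try lia. destruct (Nat.ltb_spec x (NB rho + mf Rs f)); try lia. auto. }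
    eapply hstep_root' with (th := th f L rho sg thv).
    + apply xr5 with (f := f) (i := S i) (rho := rho) (xs := xsv f rho) (j := S j) (a := a) (b := b) (v := v); auto; try lia.
      all: try (simpl; rewrite Nat.sub_0_r; auto; fail). all: try (unfold xsv; rewrite length_seq; auto; fail).


      * replace (S j - 1) with j by lia. apply lin_Y.
        -- intros x Hx Hx'. rewrite flat_map_app, flat_map_one in Hx. apply in_app_or in Hx as [Hx|Hx].
           ++ rewrite flat_BS in Hx. apply (NoDup_app_disj _ _ x (rule_nodup f rho j Hin)); auto.
           ++ apply Hvb in Hx. assert (x < NB rho); [|lia]. apply (bound_rule rho 0). apply in_or_app; auto.
        -- rewrite flat_map_app, flat_map_one, app_assoc, flat_BS. apply NoDup_app; auto.
           ++ apply (rule_nodup f); auto.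
           ++ intros x Hx Hx'. apply Hvb in Hx'. apply (bound_rule rho j) in Hx. lia.
        -- intros x Hx. rewrite flat_map_app, flat_map_one in Hx. apply in_app_or in Hx as [Hx|Hx].
           ++ left. rewrite flat_BS in Hx. apply (bound_rule rho j). apply in_or_app; auto.
           ++ right. auto.
    + replace (S j - 1) with j by lia. rewrite th_inst, map_app, th_BS. unfold Tj. simpl. rewrite Hv. auto.
    + rewrite th_inst, img_start. cbn [map subst]. rewrite sl_remove; auto.
Qed.

End Chain.


Lemma G_subst_wfU sg (u : term (lsym F)) : G (subst sg u) -> wfU u.
Proof.
  induction u as [x|s us IH] using term_ind2; intros H; [unfold wfU; simpl; auto|].
  unfold wfU. apply allsyms_Fun. simpl in H. inversion H; subst. rewrite length_map in H2.
  split; auto. intros u Hu. rewrite Forall_forall in IH. apply IH; auto.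
  eapply G_in; eauto. apply in_map; auto.
Qed.

Lemma sim_bot f L i rho us sg :
  nth_error (Rs f) i = Some rho -> In i L -> Forall (lnf Rs) us -> NoDup (flat_map vars us) ->
  disjoint (flat_map vars us) (vars (lhs rho)) -> ~ unifiable (Fun f (map erase us)) (lhs rho) ->
  G (Fun (LD f L) (map (subst sg) us)) ->
  hstep ar Rs nuM (img (Fun (LD f L) (map (subst sg) us))) (img (Fun (LD f (remove_idx i L)) (map (subst sg) us))) 0.
Proof.
  intros Hrho HiL Hlnf Hnd Hdis Hun HG.
  assert (Hin : In rho (Rs f)) by (eapply nth_error_In; eauto).
  assert (Himf : i < mf Rs f) by (unfold mf; apply nth_error_Some; congruence).
  destruct (rule_facts f rho Hin) as (Hf & Hwl & _ & _ & Hcl & _ & _ & _ & _ & Hlin & _).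
  assert (Hlhs : lhs rho = Fun f (lhs_args rho)) by (unfold lhs; rewrite Hf; auto).
  rewrite Hlhs in Hun, Hdis. pose proof (rule_len f rho Hin) as Hll.
  inversion HG as [|s0 ts0 HlenG HcG HaG]. simpl in HlenG. rewrite length_map in HlenG.
  assert (HwU : Forall wfU us).
  { rewrite Forall_forall. intros u Hu. apply (G_subst_wfU sg).
    eapply G_in; eauto. apply in_map; auto. }
  rewrite Hlhs in Hwl. apply wf_Fun in Hwl as [_ Hwl].
  unfold linear in Hlin. rewrite Hlhs in Hlin. simpl in Hlin.
  destruct (unif_clash f us (lhs_args rho)) as [k [u [l [Hu [Hl Hc]]]]]; auto.
  { rewrite Forall_forall; auto. }
  { congruence. }
  rewrite Forall_forall in Hlnf, HwU, Hcl.
  assert (Hinu : In u us) by (eapply nth_error_In; eauto).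
  assert (Hinl : In l (lhs_args rho)) by (eapply nth_error_In; eauto).
  destruct (clash_ap u l sg Hc (Hlnf u Hinu) (HwU u Hinu) (Hwl l Hinl) (Hcl l Hinl) (ar f + mf Rs f))
    as [v [thv [Hap [Hnv [Hvb Hvth]]]]].
  assert (Hk : k < length us) by (apply nth_error_Some; congruence).
  set (TH := fun x => if x <? ar f then img (subst sg (nth x us (Var 0)))
                      else if x <? ar f + mf Rs f then nth (x - ar f) (sl f L) hbot else thv x).
  assert (Hys : map (subst TH) (map Var (seq 0 (ar f))) = map (fun u => img (subst sg u)) us).
  { rewrite map_map. rewrite <- HlenG. rewrite <- (map_seq_nth (fun u => img (subst sg u)) us (Var 0) 0).
    apply map_ext_in. intros x Hx. apply in_seq in Hx. simpl. unfold TH.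
    destruct (Nat.ltb_spec x (ar f)); try lia. rewrite Nat.sub_0_r. auto. }
  assert (Hxs : map (subst TH) (map Var (seq (ar f) (mf Rs f))) = sl f L).
  { rewrite map_map. transitivity (map (fun x => x) (sl f L)); [|apply map_id].
    rewrite <- (map_seq_nth (fun x => x) (sl f L) hbot (ar f)). rewrite length_sl.
    apply map_ext_in. intros x Hx. apply in_seq in Hx. simpl. unfold TH.
    destruct (Nat.ltb_spec x (ar f)); try lia. destruct (Nat.ltb_spec x (ar f + mf Rs f)); try lia. auto. }
  assert (Hv : subst TH v = img (subst sg u)).
  { rewrite <- Hvth. apply subst_ext. intros x Hx. apply Hvb in Hx. unfold TH.
    destruct (Nat.ltb_spec x (ar f)); try lia. destruct (Nat.ltb_spec x (ar f + mf Rs f)); try lia. auto. }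
  assert (Hargs : repl (map (fun u => img (subst sg u)) us) (S k) [img (subst sg u)] = map (fun u => img (subst sg u)) us).
  { replace (img (subst sg u)) with (nth k (map (fun u => img (subst sg u)) us) (img (subst sg u))) at 1.
    - apply repl_nth. rewrite length_map; auto.
    - rewrite (map_nth (fun u => img (subst sg u)) us u k). rewrite (nth_error_nth us k u Hu). auto. }
  eapply hstep_root' with (th := TH).
  - apply xr6 with (f := f) (i := S i) (rho := rho) (xs := seq (ar f) (mf Rs f)) (ys := seq 0 (ar f))
      (j := S k) (lj := l) (v := v); auto; try lia.
    + simpl. rewrite Nat.sub_0_r. auto.
    + simpl. rewrite Nat.sub_0_r. auto.
    + rewrite length_seq; auto.
    + rewrite length_seq; auto.
    + unfold linear. rewrite vars_Fun, flat_map_app, !flat_map_repl. cbn [flat_map vars]. rewrite !app_nil_r.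
      replace (S k - 1) with k by lia. replace (S i - 1) with i by lia.
      rewrite !firstn_map, !skipn_map, !flat_map_Var. replace (vars (@htop F)) with (@nil nat) by reflexivity. rewrite app_nil_l. rewrite <- !app_assoc. apply NoDup_mid.
      * rewrite app_assoc. apply NoDup_app.
        -- apply NoDup_firstn_skipn, seq_NoDup.
        -- apply NoDup_firstn_skipn, seq_NoDup.
        -- intros x Hx Hx'.
           apply in_app_or in Hx as [Hx|Hx]; [apply firstn_In in Hx|apply skipn_In in Hx];
           apply in_app_or in Hx' as [Hx'|Hx']; (apply firstn_In in Hx' || apply skipn_In in Hx');
           apply in_seq in Hx; apply in_seq in Hx'; lia.
      * auto.
      * intros x Hx Hx'. apply Hvb in Hx.
        repeat (apply in_app_or in Hx' as [Hx'|Hx']);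
          (apply firstn_In in Hx' || apply skipn_In in Hx'); apply in_seq in Hx'; lia.
  - rewrite img_LD. simpl. f_equal. rewrite map_app, !map_repl, Hys, Hxs. cbn [map subst].
    rewrite Hv, Hargs, sl_top; auto. rewrite map_map. auto.
  - rewrite img_LD. simpl. f_equal. rewrite map_app, !map_repl, Hys, Hxs. cbn [map subst].
    rewrite Hv, Hargs, sl_remove; auto. rewrite map_map. auto.
Qed.


Scheme lstep_mut := Induction for lstep Sort Prop
with lsteps_mut := Induction for lsteps Sort Prop.
Combined Scheme lstep_comb from lstep_mut, lsteps_mut.

Lemma nth_mid {A} (ls rs : list A) x : nth_error (ls ++ x :: rs) (length ls) = Some x.
Proof. rewrite nth_error_app2 by lia. rewrite Nat.sub_diag. auto. Qed.

Lemma G_replace g ls s t rs : G (Fun g (ls ++ s :: rs)) -> G t -> ups (symF g) (S (length ls)) ->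
  G (Fun g (ls ++ t :: rs)).
Proof.
  intros H Ht Hu. inversion H as [|g0 ts0 Hl Hc Ha]; subst. constructor; auto.
  - rewrite length_app in *. simpl in *. auto.
  - intros k u Hk. rewrite nth_error_app in Hk.
    destruct (Nat.ltb_spec k (length ls)).
    + apply Ha. rewrite nth_error_app1; auto.
    + destruct (k - length ls) eqn:E.
      * simpl in Hk. inversion Hk; subst. split; auto. intros Hn.
        replace k with (length ls) in Hn by lia. contradiction.
      * apply Ha. rewrite nth_error_app2 by lia. rewrite E. auto.
Qed.

Lemma img_mid g ls x rs :
  img (Fun g (ls ++ x :: rs)) = Fun (HF (symF g)) (map img ls ++ img x :: (map img rs ++ slots g)).
Proof. simpl. rewrite map_app. simpl. rewrite <- app_assoc. auto. Qed.

Lemma conds_G f L i rho sg (cs : list nat) :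
  nth_error (Rs f) i = Some rho ->
  G (Fun (LD f L) (map (lsub Rs sg) (lhs_args rho))) ->
  (forall m a b c, nth_error (conds rho) m = Some (a, b) -> nth_error cs m = Some c ->
     G (lsub Rs sg a) -> G (lsub Rs sg b)) ->
  forall n, n <= length cs -> n <= length (conds rho) ->
  forall j a b, j < n -> nth_error (conds rho) j = Some (a, b) -> G (lsub Rs sg b).
Proof.
  intros Hrho HG IH. assert (Hin : In rho (Rs f)) by (eapply nth_error_In; eauto).
  induction n as [|n IHn]; intros Hn1 Hn2 j a b Hj Hab; [lia|].
  destruct (Nat.eq_dec j n) as [->|Hne]; [|apply (IHn ltac:(lia) ltac:(lia) j a b); auto; lia].
  destruct (nth_error cs n) as [c|] eqn:Ec; [|apply nth_error_None in Ec; lia].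
  apply (IH n a b c Hab Ec).
  apply (cond_G f rho L sg n a Hin HG).
  - intros j' a' b' Hj' Hab'. apply (IHn ltac:(lia) ltac:(lia) j' a' b'); auto.
  - rewrite nth_error_app1 by (rewrite length_map; lia). rewrite nth_error_map, Hab. auto.
Qed.

Lemma sim_all :
  (forall s t c, lstep Rs s t c -> G s -> G t /\ hplus (img s) (img t) c) /\
  (forall s t c, lsteps Rs s t c -> G s -> G t /\ hsteps ar Rs nuM (img s) (img t) c).
Proof.
  pose proof (lstep_comb F Rs (fun s t c _ => G s -> G t /\ hplus (img s) (img t) c)
                        (fun s t c _ => G s -> G t /\ hsteps ar Rs nuM (img s) (img t) c)) as HH.
  cut ((forall s t c (l : lstep Rs s t c), G s -> G t /\ hplus (img s) (img t) c) /\
       (forall s t c (l : lsteps Rs s t c), G s -> G t /\ hsteps ar Rs nuM (img s) (img t) c)); [tauto|].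
  apply HH; clear HH.
    +
      intros g ls s t rs c Hst IH HG.
      assert (Hs : G s /\ (~ ups (symF g) (S (length ls)) -> Cst s)).
      { inversion HG as [|g0 ts0 Hl Hc Ha]; subst. apply Ha. apply nth_mid. }
      destruct Hs as [Hs HsC].
      assert (Hu : ups (symF g) (S (length ls))).
      { apply NNPP. intros Hn. apply (lstep_not_Cst _ _ _ Hst). auto. }
      destruct (IH Hs) as [Ht Hp]. split; [apply (G_replace g ls s t rs); auto|].
      rewrite !img_mid. apply hplus_ctx; auto. unfold nuM. simpl. rewrite length_map. auto.
    +
      intros f L i rho us sg HiL Hrho Hlnf Hnd Hdis Hun HG. split.
      * eapply G_relabel; eauto.
      * apply hstep_hplus. apply sim_bot with (rho := rho); auto.
    +
      intros f L i rho sg cs HiL Hrho Hlen Hsteps IH HG.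
      assert (Hin : In rho (Rs f)) by (eapply nth_error_In; eauto).
      assert (Hb : forall j a b, j < length (conds rho) -> nth_error (conds rho) j = Some (a, b) -> G (lsub Rs sg b)).
      { intros j a b Hj Hab. apply (conds_G f L i rho sg cs Hrho HG) with (n := length (conds rho)) (j := j) (a := a); auto; try lia.
        intros m a' b' c' H1 H2 H3. apply (IH m a' b' c' H1 H2 H3); auto. }
      assert (Ha : forall j a b, j < length (conds rho) -> nth_error (conds rho) j = Some (a, b) -> G (lsub Rs sg a)).
      { intros j a b Hj Hab. apply (cond_G f rho L sg j a Hin HG).
        - intros j' a' b' Hj' Hab'. apply (Hb j' a' b'); auto. lia.
        - rewrite nth_error_app1 by (rewrite length_map; lia). rewrite nth_error_map, Hab. auto. }
      split.
      * apply (cond_G f rho L sg (length (conds rho)) (rhs rho) Hin HG).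
        -- intros j a b Hj Hab. eapply Hb; eauto.
        -- rewrite nth_error_app2 by (rewrite length_map; lia). rewrite length_map, Nat.sub_diag. auto.
      * apply (sim_succ f L i rho sg cs Hrho HiL); auto.
        intros m a b c Hm Hab Hc. apply (IH m a b c Hab Hc).
        apply (Ha m a b); auto. lia.
    +
      intros f L i rho sg cs a b u tau c HiL Hrho Hlt Hsteps IH Hab Hsa IHa Hlnf Hlin Hdis Hun HG.
      assert (Hin : In rho (Rs f)) by (eapply nth_error_In; eauto).
      assert (Hb : forall j a b, j < length cs -> nth_error (conds rho) j = Some (a, b) -> G (lsub Rs sg b)).
      { intros j a' b' Hj Hab'. apply (conds_G f L i rho sg cs Hrho HG) with (n := length cs) (j := j) (a := a'); auto; try lia.
        intros m a'' b'' c' H1 H2 H3. apply (IH m a'' b'' c' H1 H2 H3); auto. }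
      assert (Ha : forall j a b, j <= length cs -> nth_error (conds rho) j = Some (a, b) -> G (lsub Rs sg a)).
      { intros j a' b' Hj Hab'. apply (cond_G f rho L sg j a' Hin HG).
        - intros j' a'' b'' Hj' Hab''. apply (Hb j' a'' b''); auto. lia.
        - assert (j < length (conds rho)) by (apply nth_error_Some; congruence).
          rewrite nth_error_app1 by (rewrite length_map; lia). rewrite nth_error_map, Hab'. auto. }
      destruct (IHa (Ha (length cs) a b ltac:(lia) Hab)) as [HGu Hstu].
      destruct (rule_facts f rho Hin) as (_ & _ & _ & Hwc & _ & Hcb & _ & _ & _ & _ & Hlb).
      assert (Hinb : In b (map snd (conds rho))).
      { apply in_map_iff. exists (a, b). split; auto. eapply nth_error_In; eauto. }
      rewrite Forall_forall in Hwc, Hcb, Hlb.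
      assert (Hwb : wf ar b).
      { apply (Hwc (a, b)). eapply nth_error_In; eauto. }
      assert (Hc : clash u b).
      { apply unif_clash1; auto. eapply G_subst_wfU; eauto. apply Hlb; auto. }
      destruct (clash_ap u b tau Hc Hlnf (G_subst_wfU _ _ HGu) Hwb (Hcb b Hinb) (NB rho + mf Rs f))
        as [v [thv [Hap [Hnv [Hvb Hvth]]]]].
      split.
      * eapply G_relabel; eauto.
      * apply (sim_fail f L i rho sg cs Hrho HiL) with (a := a) (b := b) (v := v) (thv := thv) (X := img (subst tau u)); auto.
        intros m a' b' c' Hm Hab' Hc'. apply (IH m a' b' c' Hab' Hc').
        apply (Ha m a' b'); auto. lia.
    +
      intros s Hs. split; auto. constructor.
    +
      intros s t u c1 c2 Hst IH1 Hsts IH2 Hs.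
      destruct (IH1 Hs) as [Ht Hp]. destruct (IH2 Ht) as [Hu Hq]. split; auto.
      eapply hsteps_trans; eauto. apply hplus_hsteps; auto.
Qed.


Definition frame : Type := (hsym F * list (term (hsym F)) * list (term (hsym F)))%type.
Fixpoint plug (C : list frame) (t : term (hsym F)) : term (hsym F) :=
  match C with
  | [] => t
  | (h, ls, rs) :: C' => Fun h (ls ++ plug C' t :: rs)
  end.
Definition active_ctx (C : list frame) : Prop :=
  Forall (fun fr => match fr with (h, ls, rs) => nuM h (S (length ls)) end) C.

Lemma hplus_plug C s t c : active_ctx C -> hplus s t c -> hplus (plug C s) (plug C t) c.
Proof.
  induction C as [|[[h ls] rs] C IH]; intros HC Hp; simpl; auto.
  inversion HC; subst. apply hplus_ctx; auto.
Qed.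

Lemma plug_app C1 C2 t : plug (C1 ++ C2) t = plug C1 (plug C2 t).
Proof. induction C1 as [|[[h ls] rs] C IH]; simpl; auto. rewrite IH; auto. Qed.

Lemma lcond_sim s t : lcond Rs s t -> G s -> G t /\ exists C c, active_ctx C /\ hplus (img s) (plug C (img t)) c.
Proof.
  induction 1 as [s t Hr | g ts s t Hin Hl IH].
  - destruct Hr as [f L i rho sg cs a b HiL Hrho Hlt Hst Hab]. intros HG.
    assert (Hin : In rho (Rs f)) by (eapply nth_error_In; eauto).
    assert (Himf : i < mf Rs f) by (unfold mf; apply nth_error_Some; congruence).
    assert (IH : forall m a b c, nth_error (conds rho) m = Some (a, b) -> nth_error cs m = Some c ->
                  G (lsub Rs sg a) -> G (lsub Rs sg b) /\ hsteps ar Rs nuM (img (lsub Rs sg a)) (img (lsub Rs sg b)) c).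
    { intros m a' b' c' H1 H2 H3. apply (proj2 sim_all); auto. eapply Hst; eauto. }
    assert (Hb : forall j a b, j < length cs -> nth_error (conds rho) j = Some (a, b) -> G (lsub Rs sg b)).
    { intros j a' b' Hj Hab'. apply (conds_G f L i rho sg cs Hrho HG) with (n := length cs) (j := j) (a := a'); auto; try lia.
      intros m a'' b'' c' H1 H2 H3. apply (IH m a'' b'' c' H1 H2 H3). }
    assert (Ha : forall j a b, j <= length cs -> nth_error (conds rho) j = Some (a, b) -> G (lsub Rs sg a)).
    { intros j a' b' Hj Hab'. apply (cond_G f rho L sg j a' Hin HG).
      - intros j' a'' b'' Hj' Hab''. apply (Hb j' a'' b''); auto. lia.
      - assert (j < length (conds rho)) by (apply nth_error_Some; congruence).
        rewrite nth_error_app1 by (rewrite length_map; lia). rewrite nth_error_map, Hab'. auto. }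
    split; [apply (Ha (length cs) a b); auto|].
    set (j := length cs) in *.
    exists [(HAux f (S i) (S j), IA rho sg ++ firstn i (sl f L) ++ Bimg rho sg j, skipn (S i) (sl f L))].
    exists (list_sum (firstn j cs)). split.
    + constructor; [|constructor]. unfold nuM. simpl.
      rewrite !length_app, length_IA, length_firstn, length_sl, (rule_len f rho Hin).
      unfold Bimg. rewrite length_map, length_firstn. lia.
    + cbn [plug]. replace ((IA rho sg ++ firstn i (sl f L) ++ Bimg rho sg j) ++ img (lsub Rs sg a) :: skipn (S i) (sl f L))
        with (IA rho sg ++ repl (sl f L) (S i) (Bimg rho sg j ++ [img (lsub Rs sg a)])).
      * change (hplus (img (Fun (LD f L) (map (lsub Rs sg) (lhs_args rho)))) (Tj f i rho L sg j (img (lsub Rs sg a))) (list_sum (firstn j cs))). apply (chain f L i rho sg cs Hrho HiL) with (b := b); auto; try lia.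
        intros m a' b' c' Hm Hab' Hc'. apply (IH m a' b' c' Hab' Hc').
        apply (Ha m a' b'); auto. lia.
      * unfold repl. replace (S i - 1) with i by lia. rewrite <- !app_assoc. reflexivity.
  - intros HG. apply In_nth_error in Hin as [k Hk].
    destruct (nth_error_split ts k Hk) as [ls [rs [Ets Hlen]]]. subst ts.
    assert (Hs : G s /\ (~ ups (symF g) (S (length ls)) -> Cst s)).
    { inversion HG as [|g0 ts0 Hl0 Hc Ha]; subst. apply Ha. apply nth_mid. }
    destruct Hs as [Hs HsC].
    assert (Hu : ups (symF g) (S (length ls))).
    { apply NNPP. intros Hn. apply (lcond_not_Cst _ _ Hl). auto. }
    destruct (IH Hs) as [Ht [C [c [HC Hp]]]]. split; auto.
    exists ((HF (symF g), map img ls, map img rs ++ slots g) :: C), c. split.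
    + constructor; auto. unfold nuM. simpl. rewrite length_map. auto.
    + rewrite img_mid. simpl. apply hplus_ctx; auto. unfold nuM. simpl. rewrite length_map. auto.
Qed.

Definition Pinf (X : term (hsym F)) : Prop :=
  exists s C, G s /\ linf Rs s /\ active_ctx C /\ X = plug C (img s).

Lemma Pinf_step X : Pinf X -> exists X' c, hplus X X' c /\ Pinf X'.
Proof.
  intros [s [C [HG [[sq [H0 Hsq]] [HC ->]]]]].
  assert (Hl1 : linf Rs (sq 1)) by (exists (fun i => sq (S i)); split; auto).
  destruct (Hsq 0) as [[c Hst]|Hlc]; rewrite H0 in *.
  - destruct (proj1 sim_all _ _ _ Hst HG) as [HG1 Hp].
    exists (plug C (img (sq 1))), c. split; [apply hplus_plug; auto|].
    exists (sq 1), C. auto.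
  - destruct (lcond_sim _ _ Hlc HG) as [HG1 [C' [c [HC' Hp]]]].
    exists (plug (C ++ C') (img (sq 1))), c. split.
    + rewrite plug_app. apply hplus_plug; auto.
    + exists (sq 1), (C ++ C'). repeat split; auto. apply Forall_app; auto.
Qed.

Definition Qinf (X : term (hsym F)) : Prop := exists Y c, hsteps ar Rs nuM X Y c /\ Pinf Y.

Lemma Qinf_step X : Qinf X -> exists X', (exists c, hstep ar Rs nuM X X' c) /\ Qinf X'.
Proof.
  intros [Y [c [Hs HP]]]. destruct Hs as [Y|X m Y c1 c2 H1 H2].
  - destruct (Pinf_step Y HP) as [X' [c [[m [c1 [c2 [H1 [H2 _]]]]] HP']]].
    exists m. split; eauto. exists X', c2. auto.
  - exists m. split; eauto. exists Y, c2. auto.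
Qed.

Lemma Qinf_hinf X : Qinf X -> hinf ar Rs nuM X.
Proof.
  intros HQ.
  set (nxt := fun Z => epsilon (inhabits Z) (fun Z' => (exists c, hstep ar Rs nuM Z Z' c) /\ Qinf Z')).
  assert (Hn : forall Z, Qinf Z -> (exists c, hstep ar Rs nuM Z (nxt Z) c) /\ Qinf (nxt Z)).
  { intros Z HZ. unfold nxt. apply epsilon_spec. apply Qinf_step; auto. }
  exists (fun n => Nat.iter n nxt X). split; auto.
  assert (HQn : forall n, Qinf (Nat.iter n nxt X)).
  { induction n; simpl; auto. apply Hn; auto. }
  intros n. simpl. apply Hn. auto.
Qed.

Lemma dh_le s : G s -> ele (dh_lab Rs s) (dh_nu ar Rs nuM (img s)).
Proof.
  intros HG. unfold dh_lab, dh_nu. apply esup_mono.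
  intros y [[t [c [Hst ->]]]|[-> Hl]].
  - exists (fin c). split; [|apply ele_refl]. left. exists (img t), c. split; auto.
    apply (proj2 sim_all _ _ _ Hst HG).
  - exists inf. split; [|apply ele_refl]. right. split; auto.
    apply Qinf_hinf. exists (img s), 0. split; [constructor|]. exists s, []. repeat split; auto. constructor.
Qed.


Lemma lsub_Var_id t : lsub Rs Var t = label Rs t.
Proof. unfold lsub. apply subst_id. auto. Qed.

Lemma img_label t : img (label Rs t) = xiT Rs t.
Proof.
  rewrite <- lsub_Var_id, img_lsub. apply subst_id. auto.
Qed.

Lemma G_label_basic t : ground_basic ar Rs t -> G (label Rs t).
Proof.
  intros [Hw [_ [f [ts [-> [Hd Hc]]]]]].
  rewrite <- lsub_Var_id, lsub_Fun. apply wf_Fun in Hw as [Hl Hw].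
  constructor.
  - rewrite length_map, symF_labsym; auto.
  - intros c Hc'. unfold labsym in Hc'. destruct (Rs f) eqn:E; [exfalso; apply Hd; auto|discriminate].
  - intros k u Hk. rewrite nth_error_map in Hk. destruct (nth_error ts k) as [u0|] eqn:E; inversion Hk; subst.
    assert (Hin : In u0 ts) by (eapply nth_error_In; eauto).
    rewrite Forall_forall in Hc.
    assert (HC : Cst (lsub Rs Var u0)) by (apply CT; auto; intros; constructor).
    split; auto. apply Cst_G; auto.
Qed.

End Main.


Lemma xiT_ok {F} (ar : F -> nat) (Rs : F -> list (crule F)) t : wf ar t -> allsyms (hsym_ok ar Rs) (xiT Rs t).
Proof.
  unfold xiT. induction t as [x|g ts IH] using term_ind2; intros Hw; [simpl; auto|].
  apply wf_Fun in Hw as [Hl Hw]. simpl xi. apply allsyms_Fun. split.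
  - simpl. rewrite length_app, length_map, repeat_length. lia.
  - intros u Hu. apply in_app_or in Hu as [Hu|Hu].
    + apply in_map_iff in Hu as [u' [<- Hu']]. rewrite Forall_forall in IH. auto.
    + apply repeat_spec in Hu. subst. simpl. auto.
Qed.

Lemma hsize_xiT {F} (Rs : F -> list (crule F)) t : hsize (xiT Rs t) = wsize (fun _ => 1) t.
Proof.
  unfold xiT, hsize. induction t as [x|g ts IH] using term_ind2; [reflexivity|].
  simpl. rewrite map_app, list_sum_app.
  replace (list_sum (map (wsize (fun h : hsym F => match h with HTop => 0 | _ => 1 end)) (repeat (@htop F) (mf Rs g)))) with 0.
  - f_equal. rewrite Nat.add_0_r. rewrite map_map. f_equal. apply map_ext_in.
    intros u Hu. rewrite Forall_forall in IH. auto.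
  - induction (mf Rs g); simpl; auto.
Qed.

Lemma xiT_cterm {F} (Rs : F -> list (crule F)) t : cterm Rs t ->
  allsyms (fun h _ => match h with HF c => is_constructor Rs c | HBot | HTop => True | HAux _ _ _ => False end) (xiT Rs t).
Proof.
  unfold xiT. induction t as [x|g ts IH] using term_ind2; intros Hc; [simpl; auto|].
  apply cterm_Fun in Hc as [Hc1 Hc2]. simpl xi. apply allsyms_Fun. split; auto.
  intros u Hu. apply in_app_or in Hu as [Hu|Hu].
  + apply in_map_iff in Hu as [u' [<- Hu']]. rewrite Forall_forall in IH. auto.
  + apply repeat_spec in Hu. subst. simpl. auto.
Qed.

Theorem theorem7 (F : Type) (ar : F -> nat) (Rs : F -> list (crule F))
  (ups : F -> nat -> Prop) :
  strong_cctrs ar Rs -> repmap ar ups -> usable Rs ups ->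
  forall n : nat, ele (crc ar Rs n) (rc ar Rs (mu_ups ar ups) n).
Proof.
  intros Hs _ Hus n. unfold crc, rc. apply esup_mono.
  intros y [t [Hgb [Hsz ->]]].
  exists (dh_nu ar Rs (mu_ups ar ups) (xiT Rs t)). split.
  - exists (xiT Rs t). split; [|split; auto].
    + destruct Hgb as [Hw [Hv [f [ts [Et [Hd Hc]]]]]].
      split; [apply xiT_ok; auto|]. split; [rewrite vars_xiT; auto|].
      subst t. exists (HF f), (map (xiT Rs) ts ++ repeat htop (mf Rs f)). split; [reflexivity|].
      split; auto. apply Forall_app. split.
      * rewrite Forall_forall in *. intros u Hu. apply in_map_iff in Hu as [u' [<- Hu']].
        apply xiT_cterm; auto.
      * rewrite Forall_forall. intros u Hu. apply repeat_spec in Hu. subst. simpl. auto.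
    + rewrite hsize_xiT. auto.
  - rewrite <- (img_label Rs).
    apply (dh_le ar Rs ups Hs Hus). apply G_label_basic; auto.
Qed.
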